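(* Consider $n>1$ fat robots operating in the plane under the model described in the context: semi-synchronous scheduling, rigid motion, and agreement only on the direction of the $Y$ axis. Then there is a distributed algorithm executed identically by all robots such that, from any initial configuration, the robots form a uniform circle in finite time, i.e. after finitely many Look-Compute-Move cycles the centers of the robots are placed equidistantly on a common circle, so that they are the vertices of a convex regular $n$-gon. Moreover, no collision occurs at any time during the execution.
   Context: Model (fat robots). Each robot is a closed disc of radius $1$ in the plane (this common radius serves as the unit of length for all robots) and is identified with its center. In the initial configuration the robot discs do not overlap. The robots are transparent: a robot never blocks another robot's view, so every robot sees all other robots. They nevertheless act as physical obstacles. A collision occurs if, at some moment, the discs of two robots overlap. Robots are anonymous (indistinguishable), autonomous, and oblivious: they keep no memory of past observations or computations. They do not communicate by message passing. Each robot uses its own local coordinate system. All robots agree on the direction of the $Y$ axis (north/south), but not on the orientation of the $X$ axis, i.e. there is no common chirality. Each robot repeatedly executes a cycle of three phases: - Look: the robot takes a snapshot of the positions of all robots in its local coordinates. - Compute: it computes a destination point from this snapshot. - Move: it moves to that destination. Semi-synchronous scheduling means that in each round an arbitrary nonempty subset of robots performs a full Look-Compute-Move cycle simultaneously and atomically, so no robot observes another robot while that robot is moving. Rigid motion means a moving robot always reaches its computed destination without being stopped. The number of robots $n$ and a length $a>3$ are given to the robots as inputs. The side length of the polygon to be formed is required to be at least $a$. *)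

(* Defs.v *)
From Stdlib Require Import Reals.
Open Scope R_scope.

Definition pt : Type := (R * R)%type.

Definition dist (p q : pt) : R :=
  sqrt ((fst p - fst q) ^ 2 + (snd p - snd q) ^ 2).

(** A local coordinate system of a robot: an arbitrary origin, the common
    unit of length (the robot radius), the common direction of the Y axis,
    and an X axis whose orientation may be flipped (no common chirality). *)
Record frame : Type := mkFrame { origin : pt ; flipx : bool }.

Definition xsign (f : frame) : R := if flipx f then -1 else 1.

Definition to_local (f : frame) (q : pt) : pt :=
  (xsign f * (fst q - fst (origin f)), snd q - snd (origin f)).

Definition to_global (f : frame) (q : pt) : pt :=
  (fst (origin f) + xsign f * fst q, snd (origin f) + snd q).

Definition config : Type := nat -> pt.

(** An (oblivious, anonymous) algorithm: from the robot's own position and the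
    set of positions of all robots, both in its local coordinates, it computes a
    destination in local coordinates. *)
Definition algorithm : Type := pt -> (pt -> Prop) -> pt.

Definition snapshot (n : nat) (f : frame) (P : config) : pt -> Prop :=
  fun q => exists j, (j < n)%nat /\ q = to_local f (P j).

(** One semi-synchronous round: activated robots perform Look-Compute-Move
    atomically on the same snapshot; rigid motion (destination reached). *)
Definition step (n : nat) (A : algorithm) (F : nat -> frame)
    (act : nat -> bool) (P : config) : config :=
  fun i => if act i
           then to_global (F i) (A (to_local (F i) (P i)) (snapshot n (F i) P))
           else P i.

Fixpoint exec (n : nat) (A : algorithm) (F : nat -> frame)
    (act : nat -> nat -> bool) (P0 : config) (k : nat) : config :=
  match k with
  | O => P0
  | S k' => step n A F (act k') (exec n A F act P0 k')
  end.

(** SSYNC scheduler: every round activates a nonempty subset of robots, and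
    (fairness) every robot is activated infinitely often. *)
Definition valid_schedule (n : nat) (act : nat -> nat -> bool) : Prop :=
  (forall k, exists i, (i < n)%nat /\ act k i = true) /\
  (forall i, (i < n)%nat -> forall k, exists k', (k <= k')%nat /\ act k' i = true).

(** Discs of radius 1 centered at p and q overlap iff dist p q < 2. *)
Definition no_overlap (n : nat) (P : config) : Prop :=
  forall i j, (i < n)%nat -> (j < n)%nat -> i <> j -> 2 <= dist (P i) (P j).

(** Position at time t in [0,1] of a robot moving along the straight segment
    from p to d during a round (all active robots move simultaneously). *)
Definition interp (p d : pt) (t : R) : pt :=
  (fst p + t * (fst d - fst p), snd p + t * (snd d - snd p)).

Definition collision_free_move (n : nat) (P Q : config) : Prop :=
  forall t, 0 <= t <= 1 ->
    no_overlap n (fun i => interp (P i) (Q i) t).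

Definition vertex (c : pt) (r th : R) (n k : nat) : pt :=
  (fst c + r * cos (th + 2 * PI * INR k / INR n),
   snd c + r * sin (th + 2 * PI * INR k / INR n)).

Definition uniform_circle (n : nat) (a : R) (P : config) : Prop :=
  exists (c : pt) (r th : R) (s : nat -> nat),
    0 < r /\
    (forall i, (i < n)%nat -> (s i < n)%nat) /\
    (forall i j, (i < n)%nat -> (j < n)%nat -> s i = s j -> i = j) /\
    (forall i, (i < n)%nat -> P i = vertex c r th n (s i)) /\
    a <= dist (vertex c r th n 0) (vertex c r th n 1).

(* Main.v *)
Require Import Defs.
From Stdlib Require Import Reals Lra Lia ZArith Classical List ClassicalEpsilon FunctionalExtensionality PropExtensionality.
Open Scope R_scope.
Notation dist := Defs.dist.

Record iso := mkIso { fl : bool; tx : R; ty : R }.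
Definition sg (b : bool) : R := if b then -1 else 1.
Definition app (g : iso) (q : pt) : pt := (sg (fl g) * fst q + tx g, snd q + ty g).
Definition comp (g h : iso) : iso :=
  mkIso (xorb (fl g) (fl h)) (sg (fl g) * tx h + tx g) (ty h + ty g).
Definition inv (g : iso) : iso := mkIso (fl g) (- (sg (fl g) * tx g)) (- ty g).
Definition idi : iso := mkIso false 0 0.

Lemma pt_eq (p q : pt) : fst p = fst q -> snd p = snd q -> p = q.
Proof. destruct p, q; simpl; intros; subst; auto. Qed.

Lemma sg_sq b : sg b * sg b = 1.
Proof. destruct b; simpl; lra. Qed.
Lemma sg_xor a b : sg (xorb a b) = sg a * sg b.
Proof. destruct a, b; simpl; lra. Qed.

Lemma app_comp g h q : app (comp g h) q = app g (app h q).
Proof. destruct g as [[] ? ?], h as [[] ? ?], q; unfold app, comp; simpl; apply pt_eq; simpl; ring. Qed.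
Lemma app_inv_l g q : app (inv g) (app g q) = q.
Proof. destruct g as [[] ? ?], q; unfold app, inv; simpl; apply pt_eq; simpl; ring. Qed.
Lemma app_inv_r g q : app g (app (inv g) q) = q.
Proof. destruct g as [[] ? ?], q; unfold app, inv; simpl; apply pt_eq; simpl; ring. Qed.
Lemma app_id q : app idi q = q.
Proof. destruct q; unfold app; simpl; apply pt_eq; simpl; ring. Qed.
Lemma app_inj g p q : app g p = app g q -> p = q.
Proof. intro H. rewrite <- (app_inv_l g p), <- (app_inv_l g q), H. auto. Qed.
Lemma app_inv_comp g h q : app (inv (comp g h)) q = app (inv h) (app (inv g) q).
Proof. apply (app_inj (comp g h)). rewrite app_inv_r, app_comp, !app_inv_r. auto. Qed.

Definition img (g : iso) (S : pt -> Prop) : pt -> Prop := fun q => S (app (inv g) q).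

Lemma set_ext (S T : pt -> Prop) : (forall q, S q <-> T q) -> S = T.
Proof. intro H; apply functional_extensionality; intro q; apply propositional_extensionality; auto. Qed.

Lemma img_comp g h S : img g (img h S) = img (comp g h) S.
Proof. apply set_ext; intro q; unfold img. rewrite app_inv_comp. tauto. Qed.
Lemma img_id S : img idi S = S.
Proof. apply set_ext; intro q; unfold img. replace (app (inv idi) q) with q. tauto.
  destruct q; unfold app, inv, idi; simpl; apply pt_eq; simpl; ring. Qed.
Lemma img_inv_l g S : img (inv g) (img g S) = S.
Proof. apply set_ext; intro q; unfold img. replace (app (inv (inv g)) q) with (app g q).
  rewrite app_inv_l; tauto.
  destruct g as [[] ? ?], q; unfold app, inv; simpl; apply pt_eq; simpl; ring. Qed.
Lemma img_inv_r g S : img g (img (inv g) S) = S.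
Proof. apply set_ext; intro q; unfold img. replace (app (inv (inv g)) (app (inv g) q)) with q.
  tauto.
  destruct g as [[] ? ?], q; unfold app, inv; simpl; apply pt_eq; simpl; ring. Qed.

Definition imgP (n : nat) (P : config) : pt -> Prop := fun q => exists j, (j < n)%nat /\ q = P j.
Definition mapc (g : iso) (P : config) : config := fun i => app g (P i).

Lemma img_imgP n g P : img g (imgP n P) = imgP n (mapc g P).
Proof. apply set_ext; intro q; unfold img, imgP, mapc; split.
  - intros [j [Hj E]]. exists j; split; auto. rewrite <- E, app_inv_r; auto.
  - intros [j [Hj E]]. exists j; split; auto. rewrite E, app_inv_l; auto. Qed.

Definition Lf (f : frame) : iso := mkIso (flipx f) (- (xsign f * fst (origin f))) (- snd (origin f)).
Lemma to_local_app f q : to_local f q = app (Lf f) q.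
Proof. unfold to_local, app, Lf, xsign, sg; destruct (flipx f); simpl; apply pt_eq; simpl; ring. Qed.
Lemma to_global_app f q : to_global f q = app (inv (Lf f)) q.
Proof. unfold to_global, app, Lf, inv, xsign, sg; destruct (flipx f); simpl; apply pt_eq; simpl; ring. Qed.

Lemma snapshot_img n f P : snapshot n f P = img (Lf f) (imgP n P).
Proof. rewrite img_imgP. apply set_ext; intro q; unfold snapshot, imgP, mapc.
  split; intros [j [Hj E]]; exists j; split; auto; rewrite E, to_local_app; auto. Qed.

Lemma dist_app g p q : dist (app g p) (app g q) = dist p q.
Proof. unfold Defs.dist, app; simpl. f_equal. destruct (fl g); simpl; ring. Qed.
Lemma interp_app g p q t : interp (app g p) (app g q) t = app g (interp p q t).
Proof. unfold interp, app; simpl; apply pt_eq; simpl; ring. Qed.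

Lemma no_overlap_map n g P : no_overlap n (mapc g P) <-> no_overlap n P.
Proof. unfold no_overlap, mapc; split; intros H i j Hi Hj Hij; specialize (H i j Hi Hj Hij);
  rewrite ?dist_app in *; auto. Qed.

Lemma cfm_map n g P Q : collision_free_move n (mapc g P) (mapc g Q) -> collision_free_move n P Q.
Proof. unfold collision_free_move; intros H t Ht. specialize (H t Ht).
  unfold no_overlap in *; intros i j Hi Hj Hij. specialize (H i j Hi Hj Hij).
  unfold mapc in H; rewrite !interp_app, dist_app in H; auto. Qed.

Lemma nat_min (Pr : nat -> Prop) : (exists k, Pr k) -> exists k, Pr k /\ forall k', Pr k' -> (k <= k')%nat.
Proof.
  intros [k Hk]. revert Hk. induction k as [k IH] using (well_founded_induction Nat.lt_wf_0).
  intros Hk. destruct (classic (exists k', Pr k' /\ (k' < k)%nat)) as [[k' [H1 H2]]|Hn].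
  - apply (IH k' H2 H1).
  - exists k; split; auto. intros k' Hk'. destruct (Nat.lt_ge_cases k' k); auto.
    exfalso; apply Hn; eauto.
Qed.

Definition refl (c : R) (q : pt) : pt := (2 * c - fst q, snd q).
Definition sym (S : pt -> Prop) (c : R) : Prop := forall q, S q -> S (refl c q).

Lemma fin_max (f : pt -> R) n (P : config) : (0 < n)%nat ->
  exists j, (j < n)%nat /\ forall i, (i < n)%nat -> f (P i) <= f (P j).
Proof.
  induction n as [|n IH]; intros Hn; [lia|].
  destruct n as [|n].
  - exists 0%nat; split; [lia|]. intros i Hi; replace i with 0%nat by lia; lra.
  - destruct (IH ltac:(lia)) as [j [Hj Hm]].
    destruct (Rle_dec (f (P (S n))) (f (P j))) as [Hle|Hgt].
    + exists j; split; [lia|]. intros i Hi. destruct (Nat.eq_dec i (S n)); [subst; auto|]. apply Hm; lia.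
    + exists (S n); split; [lia|]. intros i Hi. destruct (Nat.eq_dec i (S n)); [subst; lra|].
      specialize (Hm i ltac:(lia)); lra.
Qed.

Lemma stab_fwd h S q : img h S = S -> S q -> S (app h q).
Proof. intros E Hq. rewrite <- E. unfold img. rewrite app_inv_l. auto. Qed.
Lemma stab_bwd h S q : img h S = S -> S q -> S (app (inv h) q).
Proof. intros E Hq. rewrite <- E in Hq. exact Hq. Qed.

Lemma stab_struct n P h : (0 < n)%nat -> img h (imgP n P) = imgP n P ->
  (forall q, app h q = q) \/ (exists c, sym (imgP n P) c /\ forall q, app h q = refl c q).
Proof.
  intros Hn E.
  assert (Hty : ty h = 0).
  { destruct (fin_max snd n P Hn) as [j [Hj Hm]].
    assert (A1 : imgP n P (app h (P j))) by (apply stab_fwd; auto; exists j; auto).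
    assert (A2 : imgP n P (app (inv h) (P j))) by (apply stab_bwd; auto; exists j; auto).
    destruct A1 as [k1 [Hk1 E1]]; destruct A2 as [k2 [Hk2 E2]].
    pose proof (Hm k1 Hk1) as M1; pose proof (Hm k2 Hk2) as M2.
    rewrite <- E1 in M1; rewrite <- E2 in M2. unfold app, inv in M1, M2; simpl in M1, M2. lra. }
  destruct h as [b t u]; simpl in Hty; subst u.
  destruct b.
  - right. exists (t / 2). split.
    + intros q Hq. replace (refl (t/2) q) with (app (mkIso true t 0) q).
      apply stab_fwd; auto. unfold app, refl; simpl; apply pt_eq; simpl; field.
    + intro q; unfold app, refl; simpl; apply pt_eq; simpl; field.
  - left.
    assert (Ht : t = 0).
    { destruct (fin_max fst n P Hn) as [j [Hj Hm]].
      assert (A1 : imgP n P (app (mkIso false t 0) (P j))) by (apply stab_fwd; auto; exists j; auto).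
      assert (A2 : imgP n P (app (inv (mkIso false t 0)) (P j))) by (apply stab_bwd; auto; exists j; auto).
      destruct A1 as [k1 [Hk1 E1]]; destruct A2 as [k2 [Hk2 E2]].
      pose proof (Hm k1 Hk1) as M1; pose proof (Hm k2 Hk2) as M2.
      rewrite <- E1 in M1; rewrite <- E2 in M2. unfold app, inv in M1, M2; simpl in M1, M2. lra. }
    subst t. intro q; unfold app; simpl; apply pt_eq; simpl; ring.
Qed.

Definition orbit (S : pt -> Prop) : (pt -> Prop) -> Prop := fun X => exists g, X = img g S.
Definition Rep (S : pt -> Prop) : pt -> Prop := epsilon (inhabits (fun _ : pt => False)) (orbit S).

Definition rankX (RankIs : (pt -> Prop) -> nat -> Prop) (X : pt -> Prop) : nat :=
  epsilon (inhabits 0%nat) (fun k => (exists g, RankIs (img g X) k) /\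
                                   forall g k', RankIs (img g X) k' -> (k <= k')%nat).

Definition SpecX (RankIs : (pt -> Prop) -> nat -> Prop)
  (Spec0 : (pt -> Prop) -> nat -> pt -> pt -> Prop) (X : pt -> Prop) (md : pt * pt) : Prop :=
  exists g, RankIs (img g X) (rankX RankIs X) /\
            Spec0 (img g X) (rankX RankIs X) (app g (fst md)) (app g (snd md)).

Definition choose_md RankIs Spec0 X : pt * pt :=
  epsilon (inhabits ((0,0),(0,0))) (SpecX RankIs Spec0 X).

Definition choose_g (X Sl : pt -> Prop) : iso := epsilon (inhabits idi) (fun g => X = img g Sl).

Definition Hyp RankIs Spec0 (p : pt) (Sl : pt -> Prop) (h : iso) : Prop :=
  img h (Rep Sl) = Rep Sl /\
  app h (fst (choose_md RankIs Spec0 (Rep Sl))) = app (choose_g (Rep Sl) Sl) p.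

Definition Alg RankIs Spec0 : algorithm := fun p Sl =>
  if excluded_middle_informative (exists h, Hyp RankIs Spec0 p Sl h)
  then app (inv (choose_g (Rep Sl) Sl))
           (app (epsilon (inhabits idi) (Hyp RankIs Spec0 p Sl))
                (snd (choose_md RankIs Spec0 (Rep Sl))))
  else p.

Definition Mv (n : nat) (S : pt -> Prop) (Q Q' : config) (M D : pt) : Prop :=
  forall i, (i < n)%nat -> Q' i = Q i \/ (Q i = M /\ Q' i = D) \/
     (exists c, sym S c /\ Q i = refl c M /\ Q' i = refl c D).

Definition Hyps (n : nat) (a : R) (RankIs : (pt -> Prop) -> nat -> Prop)
  (Spec0 : (pt -> Prop) -> nat -> pt -> pt -> Prop) : Prop :=
  (1 < n)%nat /\
  (forall Q, no_overlap n Q -> exists m, RankIs (imgP n Q) m) /\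
  (forall Q m, no_overlap n Q -> RankIs (imgP n Q) m ->
      (forall m', RankIs (imgP n Q) m' -> (m <= m')%nat) -> exists M D, Spec0 (imgP n Q) m M D) /\
  (forall Q m M D, no_overlap n Q -> Spec0 (imgP n Q) m M D ->
      (exists i, (i < n)%nat /\ Q i = M) /\ ((0 < m)%nat -> D <> M)) /\
  (forall Q Q' m M D, no_overlap n Q -> Spec0 (imgP n Q) m M D -> Mv n (imgP n Q) Q Q' M D ->
      collision_free_move n Q Q' /\
      ((forall i, (i < n)%nat -> Q' i = Q i) \/ exists m' g, (m' < m)%nat /\ RankIs (imgP n (mapc g Q')) m')) /\
  (forall Q g, no_overlap n Q -> RankIs (imgP n (mapc g Q)) 0%nat -> uniform_circle n a Q).

Lemma img_comp' g h S : img (comp g h) S = img g (img h S).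
Proof. symmetry; apply img_comp. Qed.

Lemma orbit_img g S : orbit (img g S) = orbit S.
Proof. apply functional_extensionality; intro X; apply propositional_extensionality; unfold orbit; split.
  - intros [h E]. exists (comp h g). rewrite E, img_comp; auto.
  - intros [h E]. exists (comp h (inv g)). rewrite E, img_comp', img_inv_l; auto. Qed.

Lemma Rep_img g S : Rep (img g S) = Rep S.
Proof. unfold Rep. rewrite orbit_img. auto. Qed.

Lemma Rep_orbit S : exists k, Rep S = img k S.
Proof. unfold Rep. apply (epsilon_spec (inhabits (fun _ : pt => False)) (orbit S)).
  exists S, idi. rewrite img_id; auto. Qed.

Definition pot RankIs n (P : config) : nat := rankX RankIs (Rep (imgP n P)).

Lemma rank_spec n a RankIs Spec0 P : Hyps n a RankIs Spec0 -> no_overlap n P ->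
  (exists g, RankIs (img g (Rep (imgP n P))) (pot RankIs n P)) /\
  (forall g k', RankIs (img g (Rep (imgP n P))) k' -> (pot RankIs n P <= k')%nat).
Proof.
  intros HH Hno. destruct HH as (Hn & Hcov & _).
  unfold pot, rankX.
  apply (epsilon_spec (inhabits 0%nat)).
  destruct (Rep_orbit (imgP n P)) as [k0 E0].
  destruct (nat_min (fun k => exists g, RankIs (img g (Rep (imgP n P))) k)) as [k [Hk Hmin]].
  - destruct (Hcov (mapc k0 P)) as [m Hm]. apply no_overlap_map; auto.
    exists m, idi. rewrite img_id, E0, img_imgP; auto.
  - exists k; split; auto. intros g k' H. apply Hmin; eauto.
Qed.

Lemma md_spec n a RankIs Spec0 P : Hyps n a RankIs Spec0 -> no_overlap n P ->
  SpecX RankIs Spec0 (Rep (imgP n P)) (choose_md RankIs Spec0 (Rep (imgP n P))).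
Proof.
  intros HH Hno. pose proof (rank_spec n a RankIs Spec0 P HH Hno) as [[g1 Hg1] Hmin].
  destruct HH as (Hn & Hcov & Hspec & _).
  unfold choose_md. apply epsilon_spec.
  destruct (Rep_orbit (imgP n P)) as [k0 E0].
  assert (Eq : img g1 (Rep (imgP n P)) = imgP n (mapc (comp g1 k0) P)).
  { rewrite E0, img_comp, img_imgP; auto. }
  rewrite Eq in Hg1.
  destruct (Hspec (mapc (comp g1 k0) P) (pot RankIs n P)) as [M [D HS]]; auto.
  - apply no_overlap_map; auto.
  - intros m' Hm'. apply (Hmin g1). rewrite Eq; auto.
  - exists (app (inv g1) M, app (inv g1) D). exists g1. simpl. rewrite !app_inv_r.
    unfold pot in *. rewrite Eq. split; auto.
Qed.

Definition mover RankIs Spec0 n (P : config) (i0 : nat) : Prop :=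
  exists k h, Rep (imgP n P) = img k (imgP n P) /\ img h (Rep (imgP n P)) = Rep (imgP n P) /\
    app h (fst (choose_md RankIs Spec0 (Rep (imgP n P)))) = app k (P i0).

Lemma imgP_ext n P P' : (forall i, (i < n)%nat -> P' i = P i) -> imgP n P' = imgP n P.
Proof. intro H; apply set_ext; intro q; unfold imgP; split; intros [j [Hj E]]; exists j; split; auto;
  rewrite E; [apply H|symmetry; apply H]; auto. Qed.

Lemma choose_g_spec X S k : X = img k S -> X = img (choose_g X S) S.
Proof. intro E. unfold choose_g. apply (epsilon_spec (inhabits idi) (fun g => X = img g S)). eauto. Qed.

Lemma robot_analysis n RankIs Spec0 (F : nat -> frame) (act : nat -> bool) (P : config) i g0 k0 :
  let S := imgP n P in
  let X := Rep S in
  let md := choose_md RankIs Spec0 X in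
  X = img k0 S ->
  let P' := step n (Alg RankIs Spec0) F act P in
  P' i = P i \/
  (exists tau, img tau (img g0 X) = img g0 X /\
     app tau (app g0 (fst md)) = app (comp g0 k0) (P i) /\
     app (comp g0 k0) (P' i) = app tau (app g0 (snd md))).
Proof.
  intros S X md E0 P'. unfold P', step.
  destruct (act i) eqn:Ea; [|left; auto].
  rewrite snapshot_img, to_local_app, to_global_app. unfold Alg.
  set (Li := Lf (F i)). fold S.
  destruct (excluded_middle_informative _) as [Hex|Hnex].
  2:{ left. apply app_inv_l. }
  right.
  set (h := epsilon (inhabits idi) (Hyp RankIs Spec0 (app Li (P i)) (img Li S))).
  assert (Hh : Hyp RankIs Spec0 (app Li (P i)) (img Li S) h) by (apply epsilon_spec; auto).
  unfold Hyp in Hh. rewrite Rep_img in Hh. rewrite !Rep_img. fold X in Hh |- *. fold md in Hh |- *.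
  destruct Hh as [Hst Hm].
  set (gi := choose_g X (img Li S)) in *.
  assert (Egi : X = img gi (img Li S)).
  { apply (choose_g_spec X (img Li S) (comp k0 (inv Li))). rewrite img_comp', img_inv_l; auto. }
  exists (comp (comp g0 k0) (comp (inv Li) (comp (inv gi) (comp h (inv g0))))).
  split; [|split].
  - rewrite !img_comp', img_inv_l, Hst.
    assert (E1 : img (inv gi) X = img Li S) by (rewrite Egi at 1; apply img_inv_l).
    rewrite E1, img_inv_l. rewrite <- E0. auto.
  - rewrite !app_comp, app_inv_l, Hm, app_inv_l, app_inv_l. auto.
  - rewrite !app_comp, app_inv_l. auto.
Qed.

Lemma robot_mover n RankIs Spec0 (F : nat -> frame) (act : nat -> bool) (P : config) i g0 k0 :
  let S := imgP n P in
  let X := Rep S in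
  let md := choose_md RankIs Spec0 X in
  X = img k0 S -> mover RankIs Spec0 n P i -> act i = true ->
  let P' := step n (Alg RankIs Spec0) F act P in
  (exists tau, img tau (img g0 X) = img g0 X /\
     app tau (app g0 (fst md)) = app (comp g0 k0) (P i) /\
     app (comp g0 k0) (P' i) = app tau (app g0 (snd md))).
Proof.
  intros S X md E0 Hmov Ea P'. unfold P', step. rewrite Ea.
  rewrite snapshot_img, to_local_app, to_global_app. unfold Alg.
  set (Li := Lf (F i)). fold S.
  destruct (excluded_middle_informative _) as [Hex|Hnex].
  2:{ exfalso. apply Hnex. destruct Hmov as [k [h0 [Ek [Eh0 Em]]]]. fold S X md in Ek, Eh0, Em.
      set (gi := choose_g X (img Li S)).
      assert (Egi : X = img gi (img Li S)).
      { unfold gi. apply (choose_g_spec X (img Li S) (comp k0 (inv Li))). rewrite img_comp', img_inv_l; auto. }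
      exists (comp (comp gi Li) (comp (inv k) h0)). unfold Hyp. rewrite Rep_img. fold X md. fold gi. split.
      - rewrite !img_comp', Eh0. rewrite Ek at 1. rewrite img_inv_l. symmetry; auto.
      - rewrite !app_comp, Em, app_inv_l. auto. }
  set (h := epsilon (inhabits idi) (Hyp RankIs Spec0 (app Li (P i)) (img Li S))).
  assert (Hh : Hyp RankIs Spec0 (app Li (P i)) (img Li S) h) by (apply epsilon_spec; auto).
  unfold Hyp in Hh. rewrite Rep_img in Hh. rewrite !Rep_img. fold X in Hh |- *. fold md in Hh |- *.
  destruct Hh as [Hst Hm].
  set (gi := choose_g X (img Li S)) in *.
  assert (Egi : X = img gi (img Li S)).
  { apply (choose_g_spec X (img Li S) (comp k0 (inv Li))). rewrite img_comp', img_inv_l; auto. }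
  exists (comp (comp g0 k0) (comp (inv Li) (comp (inv gi) (comp h (inv g0))))).
  split; [|split].
  - rewrite !img_comp', img_inv_l, Hst.
    assert (E1 : img (inv gi) X = img Li S) by (rewrite Egi at 1; apply img_inv_l).
    rewrite E1, img_inv_l. rewrite <- E0. auto.
  - rewrite !app_comp, app_inv_l, Hm, app_inv_l, app_inv_l. auto.
  - rewrite !app_comp, app_inv_l. auto.
Qed.

Lemma interp1 p q : interp p q 1 = q.
Proof. destruct p, q; unfold interp; simpl; apply pt_eq; simpl; ring. Qed.

Lemma cfm_end n P P' : collision_free_move n P P' -> no_overlap n P'.
Proof. intros H i j Hi Hj Hij. specialize (H 1 ltac:(lra) i j Hi Hj Hij). simpl in H.
  rewrite !interp1 in H; auto. Qed.

Lemma pot_le n a RankIs Spec0 P g m : Hyps n a RankIs Spec0 -> no_overlap n P ->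
  RankIs (imgP n (mapc g P)) m -> (pot RankIs n P <= m)%nat.
Proof.
  intros HH Hno HR. destruct (Rep_orbit (imgP n P)) as [k E].
  apply (proj2 (rank_spec n a RankIs Spec0 P HH Hno) (comp g (inv k))).
  rewrite E, img_comp', img_inv_l, img_imgP. auto.
Qed.

Lemma step_lemma n a RankIs Spec0 F act P : Hyps n a RankIs Spec0 -> no_overlap n P ->
  let P' := step n (Alg RankIs Spec0) F act P in
  collision_free_move n P P' /\
  ((forall i, (i < n)%nat -> P' i = P i) \/ (pot RankIs n P' < pot RankIs n P)%nat) /\
  (forall i0, (i0 < n)%nat -> mover RankIs Spec0 n P i0 -> act i0 = true ->
     (0 < pot RankIs n P)%nat -> (pot RankIs n P' < pot RankIs n P)%nat).
Proof.
  intros HH Hno P'.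
  pose proof (md_spec n a RankIs Spec0 P HH Hno) as [g0 [HR HS]].
  destruct (Rep_orbit (imgP n P)) as [k0 E0].
  set (X := Rep (imgP n P)) in *.
  set (md := choose_md RankIs Spec0 X) in *.
  set (Q := mapc (comp g0 k0) P).
  assert (EQ : imgP n Q = img g0 X).
  { unfold Q. rewrite <- img_imgP, img_comp', <- E0. auto. }
  set (Q' := mapc (comp g0 k0) P').
  pose proof HH as (Hn & Hcov & Hspec & Hprog & Hcore & Hfin).
  rewrite <- EQ in HR, HS.
  assert (Hpot : rankX RankIs X = pot RankIs n P) by auto.
  rewrite Hpot in HR, HS.
  assert (HnoQ : no_overlap n Q) by (apply no_overlap_map; auto).
  assert (HMv : Mv n (imgP n Q) Q Q' (app g0 (fst md)) (app g0 (snd md))).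
  { intros i Hi. destruct (robot_analysis n RankIs Spec0 F act P i g0 k0 E0) as [E|[tau [Ht [Hm Hd]]]].
    - left. unfold Q', Q, mapc. f_equal. exact E.
    - change (img tau (img g0 X) = img g0 X) in Ht.
      change (app tau (app g0 (fst md)) = app (comp g0 k0) (P i)) in Hm.
      change (app (comp g0 k0) (P' i) = app tau (app g0 (snd md))) in Hd.
      rewrite <- EQ in Ht. destruct (stab_struct n Q tau ltac:(lia) Ht) as [Hid|[c [Hsym Hrf]]].
      + right; left. unfold Q', Q, mapc. rewrite Hid in Hm, Hd. split; auto.
      + right; right. exists c. split; auto. unfold Q', Q, mapc.
        rewrite Hrf in Hm, Hd. split; auto. }
  destruct (Hcore Q Q' _ _ _ HnoQ HS HMv) as [Hcf Hdisj].
  assert (Hcf' : collision_free_move n P P') by (apply (cfm_map n (comp g0 k0)); auto).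
  assert (HnoP' : no_overlap n P') by (apply (cfm_end n P); auto).
  assert (Hdec : (exists m' g, (m' < pot RankIs n P)%nat /\ RankIs (imgP n (mapc g Q')) m') ->
                 (pot RankIs n P' < pot RankIs n P)%nat).
  { intros [m' [g [Hlt Hm']]].
    assert (E : mapc g Q' = mapc (comp g (comp g0 k0)) P').
    { unfold mapc, Q'. apply functional_extensionality; intro i. rewrite app_comp; auto. }
    rewrite E in Hm'.
    pose proof (pot_le n a RankIs Spec0 P' (comp g (comp g0 k0)) m' HH HnoP' Hm'). lia. }
  split; [auto|split].
  - destruct Hdisj as [Hu|Hd]; [left|right; auto].
    intros i Hi. apply (app_inj (comp g0 k0)). apply (Hu i Hi).
  - intros i0 Hi0 Hmov Ea Hpos.
    destruct Hdisj as [Hu|Hd]; [|auto].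
    exfalso.
    destruct (robot_mover n RankIs Spec0 F act P i0 g0 k0 E0 Hmov Ea) as [tau [Ht [Hm Hd]]].
    change (app tau (app g0 (fst md)) = app (comp g0 k0) (P i0)) in Hm.
    change (app (comp g0 k0) (P' i0) = app tau (app g0 (snd md))) in Hd.
    destruct (Hprog Q _ _ _ HnoQ HS) as [_ Hne]. specialize (Hne Hpos).
    specialize (Hu i0 Hi0). unfold Q', Q, mapc in Hu. rewrite Hd, <- Hm in Hu.
    apply Hne. apply (app_inj tau); auto.
Qed.

Lemma mover_exists n a RankIs Spec0 P : Hyps n a RankIs Spec0 -> no_overlap n P ->
  (0 < pot RankIs n P)%nat -> exists i0, (i0 < n)%nat /\ mover RankIs Spec0 n P i0.
Proof.
  intros HH Hno Hpos.
  pose proof (md_spec n a RankIs Spec0 P HH Hno) as [g0 [HR HS]].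
  destruct (Rep_orbit (imgP n P)) as [k0 E0].
  set (X := Rep (imgP n P)) in *.
  set (md := choose_md RankIs Spec0 X) in *.
  assert (EQ : imgP n (mapc (comp g0 k0) P) = img g0 X).
  { rewrite <- img_imgP, img_comp', <- E0. auto. }
  pose proof HH as (Hn & Hcov & Hspec & Hprog & Hcore & Hfin).
  rewrite <- EQ in HS.
  destruct (Hprog _ _ _ _ (proj2 (no_overlap_map n (comp g0 k0) P) Hno) HS) as [[i [Hi Ei]] _].
  exists i; split; auto. exists k0, idi. split; auto. split; [apply img_id|].
  rewrite app_id. unfold mapc in Ei. rewrite app_comp in Ei. apply app_inj in Ei. auto.
Qed.

Lemma mover_ext RankIs Spec0 n P P' i0 : (forall i, (i < n)%nat -> P' i = P i) -> (i0 < n)%nat ->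
  mover RankIs Spec0 n P i0 -> mover RankIs Spec0 n P' i0.
Proof. intros H Hi0 Hm. unfold mover. rewrite (imgP_ext n P P' H), (H i0 Hi0). exact Hm. Qed.

Lemma pot_ext RankIs n P P' : (forall i, (i < n)%nat -> P' i = P i) -> pot RankIs n P' = pot RankIs n P.
Proof. intros H. unfold pot. rewrite (imgP_ext n P P' H). auto. Qed.

Lemma no_overlap_ext n P P' : (forall i, (i < n)%nat -> P' i = P i) -> no_overlap n P -> no_overlap n P'.
Proof. intros H Hno i j Hi Hj Hij. rewrite (H i Hi), (H j Hj). auto. Qed.

Theorem framework n a RankIs Spec0 : Hyps n a RankIs Spec0 ->
  exists A : algorithm,
    forall (F : nat -> frame) (P0 : config) (act : nat -> nat -> bool),
      no_overlap n P0 ->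
      valid_schedule n act ->
      (exists k, uniform_circle n a (exec n A F act P0 k)) /\
      (forall k, collision_free_move n (exec n A F act P0 k)
                                       (exec n A F act P0 (S k))).
Proof.
  intros HH. exists (Alg RankIs Spec0). intros F P0 act Hno [Hne Hfair].
  set (C := exec n (Alg RankIs Spec0) F act P0).
  assert (CS : forall k, C (S k) = step n (Alg RankIs Spec0) F (act k) (C k)) by (intro; reflexivity).
  assert (NO : forall k, no_overlap n (C k)).
  { induction k; [exact Hno|]. rewrite CS.
    destruct (step_lemma n a RankIs Spec0 F (act k) (C k) HH IHk) as [H _].
    apply (cfm_end n (C k)); auto. }
  split.
  2:{ intro k. fold C. rewrite CS. apply (step_lemma n a RankIs Spec0 F (act k) (C k) HH (NO k)). }
  assert (PROG : forall k, (0 < pot RankIs n (C k))%nat -> exists k', (pot RankIs n (C k') < pot RankIs n (C k))%nat).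
  { intros k Hpos.
    destruct (mover_exists n a RankIs Spec0 (C k) HH (NO k) Hpos) as [i0 [Hi0 Hmov]].
    destruct (Hfair i0 Hi0 k) as [k1 [Hk1 Ha]].
    assert (IND : forall d, (forall i, (i < n)%nat -> C (k + d)%nat i = C k i) \/
                   exists k', (pot RankIs n (C k') < pot RankIs n (C k))%nat).
    { induction d as [|d IHd].
      - left. intros i _. rewrite Nat.add_0_r. auto.
      - destruct IHd as [Hu|Hd]; [|right; auto].
        replace (k + S d)%nat with (S (k + d)) by lia. rewrite CS.
        destruct (step_lemma n a RankIs Spec0 F (act (k+d)%nat) (C (k+d)%nat) HH (NO _)) as [_ [[Hu2|Hd2] _]].
        + left. intros i Hi. rewrite Hu2; auto.
        + right. exists (S (k+d)). rewrite CS. rewrite (pot_ext RankIs n (C k) (C (k+d)%nat) Hu) in Hd2. auto. }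
    destruct (IND (k1 - k)%nat) as [Hu|Hd]; [|auto].
    replace (k + (k1 - k))%nat with k1 in Hu by lia.
    exists (S k1). rewrite CS.
    pose proof (pot_ext RankIs n (C k) (C k1) Hu) as Ep.
    destruct (step_lemma n a RankIs Spec0 F (act k1) (C k1) HH (NO _)) as [_ [_ H3]].
    rewrite <- Ep. apply H3 with i0; auto.
    - apply (mover_ext RankIs Spec0 n (C k)); auto.
    - rewrite Ep; auto. }
  assert (ZERO : forall v k, pot RankIs n (C k) = v -> exists k', pot RankIs n (C k') = 0%nat).
  { intro v. induction v as [v IH] using (well_founded_induction Nat.lt_wf_0).
    intros k Hv. destruct (Nat.eq_dec v 0) as [E|E]; [subst; eauto|].
    destruct (PROG k ltac:(lia)) as [k' Hk']. apply (IH (pot RankIs n (C k'))) with k'; [lia|auto]. }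
  destruct (ZERO (pot RankIs n (C 0%nat)) 0%nat eq_refl) as [k Hk].
  exists k. fold C.
  pose proof (rank_spec n a RankIs Spec0 (C k) HH (NO k)) as [[g Hg] _].
  destruct (Rep_orbit (imgP n (C k))) as [k0 E0].
  rewrite Hk, E0, img_comp, img_imgP in Hg.
  pose proof HH as (Hn & Hcov & Hspec & Hprog & Hcore & Hfin).
  apply (Hfin (C k) (comp g k0)); auto.
Qed.

Definition ang (n : nat) (K : Z) : R := IZR K * PI / INR n.
Record poly := mkPoly { pcx : R; pcy : R; pr : R; pe : Z }.
Definition PtK n (pd : poly) (K : Z) : pt :=
  (pcx pd + pr pd * sin (ang n K), pcy pd + pr pd * cos (ang n K)).
Definition Slot n pd q := exists K, Z.Even (K - pe pd) /\ q = PtK n pd K.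

Lemma sin_periodZ x (m : Z) : sin (x + 2 * IZR m * PI) = sin x.
Proof.
  destruct (Z_le_gt_dec 0 m) as [H|H].
  - rewrite <- (Z2Nat.id m H), <- INR_IZR_INZ. apply sin_period.
  - assert (E : x = (x + 2 * IZR m * PI) + 2 * INR (Z.to_nat (- m)) * PI).
    { rewrite INR_IZR_INZ, Z2Nat.id by lia. rewrite opp_IZR. ring. }
    rewrite E at 2. symmetry; apply sin_period.
Qed.
Lemma cos_periodZ x (m : Z) : cos (x + 2 * IZR m * PI) = cos x.
Proof.
  destruct (Z_le_gt_dec 0 m) as [H|H].
  - rewrite <- (Z2Nat.id m H), <- INR_IZR_INZ. apply cos_period.
  - assert (E : x = (x + 2 * IZR m * PI) + 2 * INR (Z.to_nat (- m)) * PI).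
    { rewrite INR_IZR_INZ, Z2Nat.id by lia. rewrite opp_IZR. ring. }
    rewrite E at 2. symmetry; apply cos_period.
Qed.

Lemma INR_pos n : (1 < n)%nat -> 0 < INR n.
Proof. intro; apply lt_0_INR; lia. Qed.

Lemma ang_shift n K m : (1 < n)%nat -> ang n (K + 2 * Z.of_nat n * m) = ang n K + 2 * IZR m * PI.
Proof. intro Hn. unfold ang. rewrite plus_IZR, !mult_IZR, <- INR_IZR_INZ.
  pose proof (INR_pos n Hn). field. lra. Qed.

Lemma PtK_shift n pd K m : (1 < n)%nat -> PtK n pd (K + 2 * Z.of_nat n * m) = PtK n pd K.
Proof. intro Hn. unfold PtK. rewrite ang_shift by auto. rewrite sin_periodZ, cos_periodZ. auto. Qed.

Lemma reduceK n K : (1 < n)%nat -> exists K' m, K = (K' + 2 * Z.of_nat n * m)%Z /\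
   (- Z.of_nat n < K' <= Z.of_nat n)%Z.
Proof.
  intro Hn. set (N := Z.of_nat n).
  assert (HN : (0 < 2 * N)%Z) by (unfold N; lia).
  pose proof (Z.mod_pos_bound K (2 * N) HN) as Hb.
  pose proof (Z.div_mod K (2 * N) ltac:(lia)) as Hd.
  destruct (Z_le_gt_dec (K mod (2 * N)) N).
  - exists (K mod (2*N))%Z, (K / (2*N))%Z. split; [lia|lia].
  - exists (K mod (2*N) - 2 * N)%Z, (K / (2*N) + 1)%Z. split; [lia|lia].
Qed.

Lemma ang_abs n K : (1 < n)%nat -> (- Z.of_nat n <= K <= Z.of_nat n)%Z ->
  0 <= ang n (Z.abs K) <= PI.
Proof.
  intros Hn HK. unfold ang. pose proof (INR_pos n Hn). pose proof PI_RGT_0.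
  assert (H1 : 0 <= IZR (Z.abs K)) by (apply IZR_le; lia).
  assert (H2 : IZR (Z.abs K) <= INR n) by (rewrite INR_IZR_INZ; apply IZR_le; lia).
  split.
  - apply Rmult_le_pos; [apply Rmult_le_pos; lra|]. left; apply Rinv_0_lt_compat; lra.
  - apply (Rmult_le_reg_r (INR n)); auto. unfold Rdiv. rewrite Rmult_assoc, Rinv_l by lra. nra.
Qed.

Lemma cos_ang_abs n K : cos (ang n K) = cos (ang n (Z.abs K)).
Proof. destruct (Z_le_gt_dec 0 K).
  - rewrite Z.abs_eq by lia; auto.
  - rewrite Z.abs_neq by lia. unfold ang. rewrite opp_IZR.
    replace (- IZR K * PI / INR n) with (- (IZR K * PI / INR n)) by (unfold Rdiv; ring).
    rewrite cos_neg; auto. Qed.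

Lemma ang_lt n K1 K2 : (1 < n)%nat -> (K1 < K2)%Z -> ang n K1 < ang n K2.
Proof. intros Hn H. unfold ang. pose proof (INR_pos n Hn). pose proof PI_RGT_0.
  apply IZR_lt in H. unfold Rdiv. apply Rmult_lt_compat_r. apply Rinv_0_lt_compat; lra.
  nra. Qed.

Lemma cos_ang_lt n K1 K2 : (1 < n)%nat -> (0 <= K1)%Z -> (K1 < K2)%Z -> (K2 <= Z.of_nat n)%Z ->
  cos (ang n K2) < cos (ang n K1).
Proof.
  intros Hn H1 H12 H2.
  pose proof (ang_abs n K1 Hn ltac:(lia)) as A1. pose proof (ang_abs n K2 Hn ltac:(lia)) as A2.
  rewrite Z.abs_eq in A1, A2 by lia.
  apply cos_decreasing_1; try lra. apply ang_lt; auto.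
Qed.

Lemma sin_pi_n_pos n : (1 < n)%nat -> 0 < sin (PI / INR n).
Proof. intro Hn. apply sin_gt_0.
  - pose proof (INR_pos n Hn). pose proof PI_RGT_0. apply Rdiv_lt_0_compat; lra.
  - pose proof PI_RGT_0. assert (1 < INR n) by (apply lt_1_INR; lia).
    apply (Rmult_lt_reg_r (INR n)); [lra|]. unfold Rdiv. rewrite Rmult_assoc, Rinv_l by lra. nra.
Qed.

Definition d2 (p q : pt) : R := (fst p - fst q)^2 + (snd p - snd q)^2.

Lemma ang_sub n K K' : ang n (K - K') = ang n K - ang n K'.
Proof. unfold ang. rewrite minus_IZR. unfold Rdiv; ring. Qed.

Lemma d2_PtK n pd K K' : d2 (PtK n pd K) (PtK n pd K') = (pr pd)^2 * (2 - 2 * cos (ang n (K - K'))).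
Proof. unfold d2, PtK; simpl. rewrite ang_sub, cos_minus.
  pose proof (sin2_cos2 (ang n K)) as H1. pose proof (sin2_cos2 (ang n K')) as H2.
  unfold Rsqr in H1, H2. nra. Qed.

Lemma cos_ang_le n K1 K2 : (1 < n)%nat -> (0 <= K1)%Z -> (K1 <= K2)%Z -> (K2 <= Z.of_nat n)%Z ->
  cos (ang n K2) <= cos (ang n K1).
Proof. intros. destruct (Z.eq_dec K1 K2); [subst; lra|]. left; apply cos_ang_lt; auto; lia. Qed.

Lemma ang_0 n : ang n 0 = 0.
Proof. unfold ang. simpl. unfold Rdiv; ring. Qed.

Lemma ang_n n : (1 < n)%nat -> ang n (Z.of_nat n) = PI.
Proof. intro Hn. unfold ang. rewrite <- INR_IZR_INZ. pose proof (INR_pos n Hn). field. lra. Qed.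

Lemma ang_2 n : ang n 2 = 2 * (PI / INR n).
Proof. unfold ang. simpl. unfold Rdiv; ring. Qed.

Lemma ang_1 n : ang n 1 = PI / INR n.
Proof. unfold ang. simpl. unfold Rdiv; ring. Qed.

Lemma reduce_even n K e : (1 < n)%nat -> Z.Even (K - e) ->
  exists K' m, K = (K' + 2 * Z.of_nat n * m)%Z /\ (- Z.of_nat n < K' <= Z.of_nat n)%Z /\ Z.Even (K' - e).
Proof. intros Hn [j Hj]. destruct (reduceK n K Hn) as [K' [m [E B]]].
  exists K', m. split; auto. split; auto. exists (j - Z.of_nat n * m)%Z. lia. Qed.

Lemma chord n pd q q' : (1 < n)%nat -> Slot n pd q -> Slot n pd q' -> q <> q' ->
  d2 q q' >= (2 * pr pd * sin (PI / INR n))^2.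
Proof.
  intros Hn [K [HK Eq]] [K' [HK' Eq']] Hne. subst q q'. rewrite d2_PtK.
  assert (HJ : Z.Even (K - K' - 0)).
  { destruct HK as [j Hj]; destruct HK' as [j' Hj']. exists (j - j')%Z. lia. }
  destruct (reduce_even n (K - K') 0 Hn HJ) as [J [m [EJ [BJ [h Hh]]]]].
  assert (Hc : cos (ang n (K - K')) = cos (ang n J)).
  { rewrite EJ. rewrite ang_shift by auto. apply cos_periodZ. }
  destruct (Z.eq_dec J 0) as [E0|E0].
  - exfalso. apply Hne. replace K with (K' + 2 * Z.of_nat n * m)%Z by lia. apply PtK_shift; auto.
  - rewrite Hc, cos_ang_abs.
    assert (Hle : cos (ang n (Z.abs J)) <= cos (ang n 2)) by (apply cos_ang_le; auto; lia).
    rewrite ang_2 in Hle. rewrite cos_2a_sin in Hle.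
    assert (0 <= (pr pd)^2) by nra. nra.
Qed.

Lemma slot_height n pd q : (1 < n)%nat -> 0 < pr pd -> (pe pd = 0 \/ pe pd = 1)%Z -> Slot n pd q ->
  snd q < pcy pd + pr pd * cos (ang n (pe pd)) \/ q = PtK n pd (pe pd) \/ q = PtK n pd (- pe pd).
Proof.
  intros Hn Hr He [K [HK Eq]]. subst q.
  destruct (reduce_even n K (pe pd) Hn HK) as [K' [m [E [B [h Hh]]]]].
  rewrite E, PtK_shift by auto.
  destruct (Z.eq_dec (Z.abs K') (pe pd)) as [Ea|Ea].
  - right. destruct (Z_le_gt_dec 0 K'); [left|right]; f_equal; lia.
  - left. unfold PtK; simpl. rewrite cos_ang_abs.
    assert (cos (ang n (Z.abs K')) < cos (ang n (pe pd))) by (apply cos_ang_lt; auto; lia). nra.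
Qed.

Lemma slot_height_le n pd q : (1 < n)%nat -> 0 < pr pd -> (pe pd = 0 \/ pe pd = 1)%Z -> Slot n pd q ->
  snd q <= pcy pd + pr pd * cos (ang n (pe pd)).
Proof. intros Hn Hr He Hs. destruct (slot_height n pd q Hn Hr He Hs) as [H|[H|H]]; [lra| |];
  subst; unfold PtK; simpl; [lra|]. rewrite cos_ang_abs, Z.abs_opp, <- cos_ang_abs. lra. Qed.

Lemma slot_bounds n pd q : 0 <= pr pd -> Slot n pd q ->
  Rabs (fst q - pcx pd) <= pr pd /\ pcy pd - pr pd <= snd q.
Proof. intros Hr [K [_ E]]; subst; unfold PtK; simpl.
  pose proof (SIN_bound (ang n K)); pose proof (COS_bound (ang n K)).
  replace (pcx pd + pr pd * sin (ang n K) - pcx pd) with (pr pd * sin (ang n K)) by ring.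
  rewrite Rabs_mult, Rabs_right by lra. split; [|nra].
  assert (Rabs (sin (ang n K)) <= 1) by (apply Rabs_le; lra). nra. Qed.

Lemma slot_axis n pd q : (1 < n)%nat -> 0 < pr pd -> Slot n pd q -> fst q = pcx pd ->
  q = PtK n pd 0 \/ q = PtK n pd (Z.of_nat n).
Proof.
  intros Hn Hr [K [HK Eq]] Hx. subst q.
  destruct (reduceK n K Hn) as [K' [m [E B]]].
  rewrite E, PtK_shift in * by auto. unfold PtK in Hx; simpl in Hx.
  assert (Hs : sin (ang n K') = 0) by (apply (Rmult_eq_reg_l (pr pd)); lra).
  destruct (Z.eq_dec K' 0) as [->|N0]; [auto|].
  destruct (Z.eq_dec K' (Z.of_nat n)) as [->|Nn]; [auto|].
  exfalso. pose proof (ang_abs n K' Hn ltac:(lia)) as A.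
  destruct (Z_le_gt_dec 0 K').
  - rewrite Z.abs_eq in A by lia.
    assert (0 < sin (ang n K')).
    { apply sin_gt_0. pose proof (ang_lt n 0 K' Hn ltac:(lia)); rewrite ang_0 in *; lra.
      pose proof (ang_lt n K' (Z.of_nat n) Hn ltac:(lia)); rewrite ang_n in *; auto. }
    lra.
  - rewrite Z.abs_neq in A by lia.
    assert (0 < sin (ang n (- K'))).
    { apply sin_gt_0. pose proof (ang_lt n 0 (-K') Hn ltac:(lia)); rewrite ang_0 in *; lra.
      pose proof (ang_lt n (-K') (Z.of_nat n) Hn ltac:(lia)); rewrite ang_n in *; auto. }
    unfold ang in H. rewrite opp_IZR in H.
    replace (- IZR K' * PI / INR n) with (- (IZR K' * PI / INR n)) in H by (unfold Rdiv; ring).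
    rewrite sin_neg in H. unfold ang in Hs. lra.
Qed.

Lemma slot_bottom n pd q : (1 < n)%nat -> 0 < pr pd -> Slot n pd q -> snd q <= pcy pd - pr pd ->
  q = PtK n pd (Z.of_nat n).
Proof.
  intros Hn Hr [K [HK Eq]] Hy. subst q.
  destruct (reduceK n K Hn) as [K' [m [E B]]].
  rewrite E, PtK_shift in * by auto. unfold PtK in Hy; simpl in Hy.
  destruct (Z.eq_dec (Z.abs K') (Z.of_nat n)) as [Ea|Ea].
  - f_equal. lia.
  - exfalso. rewrite cos_ang_abs in Hy.
    assert (cos (ang n (Z.of_nat n)) < cos (ang n (Z.abs K'))) by (apply cos_ang_lt; auto; lia).
    rewrite ang_n in H by auto. rewrite cos_PI in H. nra.
Qed.

Lemma refl_PtK n pd K : refl (pcx pd) (PtK n pd K) = PtK n pd (- K).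
Proof. unfold refl, PtK; simpl. unfold ang. rewrite opp_IZR.
  replace (- IZR K * PI / INR n) with (- (IZR K * PI / INR n)) by (unfold Rdiv; ring).
  rewrite sin_neg, cos_neg. apply pt_eq; simpl; ring. Qed.

Lemma slot_refl n pd q : Slot n pd q -> Slot n pd (refl (pcx pd) q).
Proof. intros [K [[j Hj] E]]. subst. rewrite refl_PtK. exists (- K)%Z. split; auto.
  exists (- j - pe pd)%Z. lia. Qed.

Definition V n pd (k : nat) : pt := PtK n pd (pe pd - 2 * Z.of_nat k).

Lemma V_slot n pd k : Slot n pd (V n pd k).
Proof. exists (pe pd - 2 * Z.of_nat k)%Z. split; auto. exists (- Z.of_nat k)%Z. lia. Qed.

Lemma slot_V n pd q : (1 < n)%nat -> Slot n pd q -> exists k, (k < n)%nat /\ q = V n pd k.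
Proof.
  intros Hn [K [[j Hj] E]]. subst q.
  set (N := Z.of_nat n).
  assert (HN : (0 < N)%Z) by (unfold N; lia).
  pose proof (Z.mod_pos_bound (- j) N HN) as Hb.
  pose proof (Z.div_mod (- j) N ltac:(lia)) as Hd.
  exists (Z.to_nat ((- j) mod N)). split.
  - apply Nat2Z.inj_lt. rewrite Z2Nat.id by lia. fold N; lia.
  - unfold V. rewrite Z2Nat.id by lia.
    replace K with ((pe pd - 2 * ((- j) mod N)) + 2 * Z.of_nat n * (- ((- j) / N)))%Z
      by (unfold N in *; lia).
    apply PtK_shift; auto.
Qed.

Lemma V_inj n pd k k' : (1 < n)%nat -> 0 < pr pd -> (k < n)%nat -> (k' < n)%nat ->
  V n pd k = V n pd k' -> k = k'.
Proof.
  intros Hn Hr Hk Hk' E. destruct (Nat.eq_dec k k') as [|Ne]; auto. exfalso.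
  assert (Hd : d2 (V n pd k) (V n pd k') = 0) by (rewrite E; unfold d2; ring).
  unfold V in Hd. rewrite d2_PtK in Hd.
  set (J := (pe pd - 2 * Z.of_nat k - (pe pd - 2 * Z.of_nat k'))%Z) in *.
  destruct (reduceK n J Hn) as [J' [m [EJ BJ]]].
  assert (Hc : cos (ang n J) = cos (ang n J')) by (rewrite EJ, ang_shift by auto; apply cos_periodZ).
  assert (J' <> 0%Z).
  { intro. subst J'. unfold J in EJ.
    destruct (Z.eq_dec m 0) as [->|Hm]; [lia|].
    assert (Z.abs m >= 1)%Z by lia.
    assert (Z.abs (Z.of_nat n * m) >= Z.of_nat n)%Z by (rewrite Z.abs_mul; nia). lia. }
  rewrite Hc, cos_ang_abs in Hd.
  assert (cos (ang n (Z.abs J')) < cos (ang n 0)) by (apply cos_ang_lt; auto; lia).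
  rewrite ang_0, cos_0 in H0. assert (0 < (pr pd)^2) by nra. nra.
Qed.

Lemma V_vertex n pd k : (1 < n)%nat ->
  V n pd k = vertex (pcx pd, pcy pd) (pr pd) (PI / 2 - IZR (pe pd) * PI / INR n) n k.
Proof.
  intro Hn. unfold V, vertex, PtK; simpl.
  assert (E : PI / 2 - IZR (pe pd) * PI / INR n + 2 * PI * INR k / INR n =
              PI / 2 - ang n (pe pd - 2 * Z.of_nat k)).
  { unfold ang. rewrite minus_IZR, mult_IZR, <- INR_IZR_INZ. pose proof (INR_pos n Hn). field. apply Rgt_not_eq; lra. }
  rewrite E, cos_shift, sin_shift. auto.
Qed.

Lemma dist_d2 p q : dist p q = sqrt (d2 p q).
Proof. reflexivity. Qed.

Lemma dist_ge2 p q : 4 <= d2 p q -> 2 <= dist p q.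
Proof. intro H. rewrite dist_d2. rewrite <- (sqrt_square 2) by lra. apply sqrt_le_1_alt. nra. Qed.

Lemma dist_ge2_inv p q : 2 <= dist p q -> 4 <= d2 p q.
Proof. rewrite dist_d2. intro H. assert (0 <= d2 p q) by (unfold d2; apply Rplus_le_le_0_compat; apply pow2_ge_0).
  pose proof (sqrt_sqrt (d2 p q) H0). nra. Qed.

Lemma side_V n pd : (1 < n)%nat -> 0 <= pr pd ->
  dist (V n pd 0) (V n pd 1) = 2 * pr pd * sin (PI / INR n).
Proof.
  intros Hn Hr. rewrite dist_d2. unfold V. rewrite d2_PtK.
  replace (pe pd - 2 * Z.of_nat 0 - (pe pd - 2 * Z.of_nat 1))%Z with 2%Z by (simpl; lia).
  rewrite ang_2, cos_2a_sin.
  replace ((pr pd)^2 * (2 - 2 * (1 - 2 * sin (PI / INR n) * sin (PI / INR n))))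
    with ((2 * pr pd * sin (PI / INR n))^2) by ring.
  apply sqrt_pow2. pose proof (sin_pi_n_pos n Hn). nra.
Qed.

Lemma no_overlap_inj n Q i j : no_overlap n Q -> (i < n)%nat -> (j < n)%nat -> Q i = Q j -> i = j.
Proof. intros H Hi Hj E. destruct (Nat.eq_dec i j) as [|Ne]; auto. exfalso.
  specialize (H i j Hi Hj Ne). rewrite E in H. apply dist_ge2_inv in H. unfold d2 in H. nra. Qed.

Lemma no_overlap_d2 n Q p q : no_overlap n Q -> imgP n Q p -> imgP n Q q -> p <> q -> 4 <= d2 p q.
Proof. intros H [i [Hi ->]] [j [Hj ->]] Ne. apply dist_ge2_inv. apply H; auto. Qed.

Lemma count_le n Q (l : list pt) : NoDup l -> (forall q, In q l -> imgP n Q q) -> (length l <= n)%nat.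
Proof. intros Hl Hin.
  assert (length l <= length (map Q (seq 0 n)))%nat; [|rewrite length_map, length_seq in H; auto].
  apply NoDup_incl_length; auto. intros q Hq. destruct (Hin q Hq) as [j [Hj ->]].
  apply in_map. apply in_seq. lia. Qed.

Lemma fin_list n Q (C : pt -> Prop) : (forall i j, (i < n)%nat -> (j < n)%nat -> Q i = Q j -> i = j) ->
  exists l, NoDup l /\ (forall q, In q l <-> (imgP n Q q /\ C q)).
Proof.
  intro Hinj.
  assert (G : forall m, (m <= n)%nat -> exists l, NoDup l /\
             (forall q, In q l <-> ((exists j, (j < m)%nat /\ q = Q j) /\ C q))).
  { induction m as [|m IH]; intro Hm.
    - exists nil. split; [constructor|]. intro q; simpl; split; [tauto|]. intros [[j [Hj _]] _]; lia.
    - destruct (IH ltac:(lia)) as [l [Hl Hin]].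
      destruct (classic (C (Q m))) as [Hc|Hc].
      + exists (Q m :: l). split.
        * constructor; auto. intro Hq. apply Hin in Hq. destruct Hq as [[j [Hj Ej]] _].
          apply Hinj in Ej; lia.
        * intro q; simpl; rewrite Hin; split.
          -- intros [<-|[[j [Hj ->]] Hc']]; [split; auto; exists m; split; auto; lia|].
             split; auto. exists j; split; auto; lia.
          -- intros [[j [Hj ->]] Hc']. destruct (Nat.eq_dec j m) as [->|Ne]; [left; auto|].
             right. split; auto. exists j; split; auto; lia.
      + exists l. split; auto. intro q; rewrite Hin; split.
        * intros [[j [Hj ->]] Hc']. split; auto. exists j; split; auto; lia.
        * intros [[j [Hj ->]] Hc']. destruct (Nat.eq_dec j m) as [->|Ne]; [contradiction|].
          split; auto. exists j; split; auto; lia. }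
  destruct (G n (le_n n)) as [l [Hl Hin]]. exists l; split; auto.
Qed.

Lemma bound_f n Q (f : pt -> R) : exists B, forall q, imgP n Q q -> f q <= B.
Proof.
  induction n as [|n IH].
  - exists 0. intros q [j [Hj _]]; lia.
  - destruct IH as [B HB]. exists (Rmax B (f (Q n))). intros q [j [Hj ->]].
    destruct (Nat.eq_dec j n) as [->|Ne]; [apply Rmax_r|].
    eapply Rle_trans; [apply HB; exists j; split; auto; lia|apply Rmax_l].
Qed.

Lemma max_P n Q (C : pt -> Prop) (f : pt -> R) : (exists q, imgP n Q q /\ C q) ->
  exists q, imgP n Q q /\ C q /\ forall q', imgP n Q q' -> C q' -> f q' <= f q.
Proof.
  induction n as [|n IH].
  - intros [q [[j [Hj _]] _]]; lia.
  - intros Hex. destruct (classic (exists q, imgP n Q q /\ C q)) as [H|H].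
    + destruct (IH H) as [q [Hq [Cq Hm]]].
      destruct (classic (C (Q n) /\ f q < f (Q n))) as [[Cn Hlt]|Hn].
      * exists (Q n). split; [exists n; split; auto|]. split; auto.
        intros q' [j [Hj ->]] Cq'. destruct (Nat.eq_dec j n) as [->|Ne]; [lra|].
        assert (f (Q j) <= f q) by (apply Hm; auto; exists j; split; auto; lia). lra.
      * exists q. split; [destruct Hq as [j [Hj ->]]; exists j; split; auto|]. split; auto.
        intros q' [j [Hj ->]] Cq'. destruct (Nat.eq_dec j n) as [->|Ne].
        -- apply Rnot_lt_le. intro; apply Hn; auto.
        -- apply Hm; auto. exists j; split; auto; lia.
    + destruct Hex as [q [[j0 [Hj0 ->]] Cq]].
      assert (j0 = n).
      { destruct (Nat.eq_dec j0 n); auto. exfalso; apply H. exists (Q j0); split; auto. exists j0; split; auto; lia. }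
      subst j0. exists (Q n). split; [exists n; split; auto|]. split; auto.
      intros q' [j [Hj ->]] Cq'. destruct (Nat.eq_dec j n) as [->|Ne]; [lra|].
      exfalso; apply H. exists (Q j); split; auto. exists j; split; auto; lia.
Qed.

Lemma refl_refl c q : refl c (refl c q) = q.
Proof. unfold refl; destruct q; simpl; apply pt_eq; simpl; ring. Qed.

Lemma sym_unique n Q c1 c2 : (0 < n)%nat -> sym (imgP n Q) c1 -> sym (imgP n Q) c2 -> c1 = c2.
Proof.
  intros Hn H1 H2.
  destruct (fin_max fst n Q Hn) as [j [Hj Hmx]].
  destruct (fin_max (fun q => - fst q) n Q Hn) as [k [Hk Hmn]].
  assert (S1 : imgP n Q (refl c1 (Q j))) by (apply H1; exists j; auto).
  assert (S2 : imgP n Q (refl c2 (Q k))) by (apply H2; exists k; auto).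
  assert (S3 : imgP n Q (refl c1 (Q k))) by (apply H1; exists k; auto).
  assert (S4 : imgP n Q (refl c2 (Q j))) by (apply H2; exists j; auto).
  destruct S1 as [i1 [Hi1 E1]], S2 as [i2 [Hi2 E2]], S3 as [i3 [Hi3 E3]], S4 as [i4 [Hi4 E4]].
  pose proof (Hmn i1 Hi1); pose proof (Hmx i3 Hi3); pose proof (Hmn i4 Hi4); pose proof (Hmx i2 Hi2).
  rewrite <- E1 in *; rewrite <- E2 in *; rewrite <- E3 in *; rewrite <- E4 in *.
  unfold refl in *; simpl in *. lra.
Qed.

Definition s0 (a : R) : R := a + 3.
Definition sn (n : nat) : R := sin (PI / INR n).
Definition r0 n a : R := s0 a / (2 * sn n).
Definition pd1 n a (T : pt) : poly := mkPoly (fst T) (snd T - r0 n a) (r0 n a) 0.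
Definition rr2 n (A B : pt) : R := Rabs (fst A - fst B) / (2 * sn n).
Definition pd2 n (A B : pt) : poly :=
  mkPoly ((fst A + fst B) / 2) (snd A - rr2 n A B * cos (PI / INR n)) (rr2 n A B) 1.
Definition sgnR (x : R) : R := if Rle_dec 0 x then 1 else -1.

Definition isA1 (S : pt -> Prop) T := S T /\ (forall q, S q -> snd q <= snd T) /\
  (forall q, S q -> snd q = snd T -> q = T).
Definition isA2 (S : pt -> Prop) A B := S A /\ S B /\ A <> B /\ snd A = snd B /\
  (forall q, S q -> snd q <= snd A) /\ (forall q, S q -> snd q = snd A -> q = A \/ q = B).
Definition isN2 (S : pt -> Prop) := exists q1 q2 q3, S q1 /\ S q2 /\ S q3 /\ q1 <> q2 /\ q1 <> q3 /\
  q2 <> q3 /\ snd q1 = snd q2 /\ snd q1 = snd q3 /\ (forall q, S q -> snd q <= snd q1).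

Definition Crowd n (S : pt -> Prop) pd q := S q /\ ~ Slot n pd q.
Definition SepCT n (S : pt -> Prop) pd M := Crowd n S pd M /\
  (forall q, Crowd n S pd q -> snd q <= snd M) /\
  (forall q, Crowd n S pd q -> snd M - 2 < snd q -> q = M \/ exists c, sym S c /\ q = refl c M).
Definition Sep n S pd := (forall q, ~ Crowd n S pd q) \/ exists M, SepCT n S pd M.
Definition GW (pd : poly) (W : R) : R := W + 3 * pr pd + 10.
Definition AnchPd n a (S : pt -> Prop) pd y :=
  (exists T, isA1 S T /\ pd = pd1 n a T /\ y = snd T) \/
  (exists A B, isA2 S A B /\ s0 a <= Rabs (fst A - fst B) /\ pd = pd2 n A B /\ y = snd A).
Definition Good n a (S : pt -> Prop) pd y W :=
  AnchPd n a S pd y /\ 0 <= W /\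
  (forall w v, Slot n pd w -> Slot n pd v -> S w -> ~ S v -> snd v <= snd w) /\
  (forall q, Crowd n S pd q -> Rabs (fst q - pcx pd) <= W /\ snd q <= y - GW pd W + 2) /\
  ((exists q, Crowd n S pd q /\ y - GW pd W < snd q) -> Sep n S pd).
Definition CrowdList n S pd (l : list pt) := NoDup l /\ forall q, In q l <-> Crowd n S pd q.

Definition RankIs n a (S : pt -> Prop) (m : nat) : Prop :=
  (isN2 S /\ m = (2 * n + 6)%nat) \/
  (exists A B, isA2 S A B /\ Rabs (fst A - fst B) < s0 a /\ m = (2 * n + 5)%nat) \/
  (exists A B, isA2 S A B /\ Rabs (fst A - fst B) < s0 a /\
     (forall q, S q -> q <> A -> q <> B -> snd q <= snd A - 2) /\ m = (2 * n + 4)%nat) \/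
  (exists A B, isA2 S A B /\ s0 a <= Rabs (fst A - fst B) /\ m = (2 * n + 3)%nat) \/
  (exists T, isA1 S T /\ m = (2 * n + 2)%nat) \/
  (exists pd y W l b, Good n a S pd y W /\ CrowdList n S pd l /\ (b = 0 \/ b = 1)%nat /\
     (b = 0%nat -> Sep n S pd) /\ m = (2 * length l + b)%nat).

Definition Spec0 n a (S : pt -> Prop) (m : nat) (M D : pt) : Prop :=
  (isN2 S /\ m = (2 * n + 6)%nat /\ S M /\ (forall q, S q -> snd q <= snd M) /\ D = (fst M, snd M + 2)) \/
  (exists A B, isA2 S A B /\ Rabs (fst A - fst B) < s0 a /\ m = (2 * n + 5)%nat /\ M = A /\
     D = (fst M, snd M + 2)) \/
  (exists A B, isA2 S A B /\ Rabs (fst A - fst B) < s0 a /\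
     (forall q, S q -> q <> A -> q <> B -> snd q <= snd A - 2) /\ m = (2 * n + 4)%nat /\ M = A /\
     D = (fst A + s0 a * sgnR (fst A - fst B), snd A)) \/
  (exists A B W Y, isA2 S A B /\ s0 a <= Rabs (fst A - fst B) /\ m = (2 * n + 3)%nat /\ M = A /\
     D = (fst A, Y) /\ snd A < Y /\ 0 <= W /\
     forall q, S q -> q <> A -> q <> B ->
       Rabs (fst q - pcx (pd2 n A B)) <= W /\ snd q + GW (pd2 n A B) W + 2 <= Y) \/
  (exists T W Y, isA1 S T /\ m = (2 * n + 2)%nat /\ M = T /\ D = (fst T, Y) /\ snd T < Y /\ 0 <= W /\
     forall q, S q -> q <> T -> Rabs (fst q - fst T) <= W /\ snd q + GW (pd1 n a T) W + 2 <= Y) \/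
  (exists pd y W l, Good n a S pd y W /\ CrowdList n S pd l /\
     ((m = (2 * length l + 1)%nat /\ ~ Sep n S pd /\ Crowd n S pd M /\
        (forall q, Crowd n S pd q -> snd q <= snd M) /\
        exists q0, Crowd n S pd q0 /\ q0 <> M /\ (forall q, Crowd n S pd q -> q <> M -> snd q <= snd q0) /\
          D = (fst M, snd q0 + 2)) \/
      (m = (2 * length l)%nat /\ l <> nil /\ SepCT n S pd M /\ Slot n pd D /\ ~ S D /\
        (forall v, Slot n pd v -> ~ S v -> snd v <= snd D) /\
        (forall c, sym S c -> M <> refl c M -> 0 < (fst D - c) * (fst M - c))) \/
      (m = 0%nat /\ l = nil /\ S M /\ D = M))).

Lemma sn_pos n : (1 < n)%nat -> 0 < sn n.
Proof. apply sin_pi_n_pos. Qed.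

Lemma s0_ge a : 3 < a -> 6 < s0 a.
Proof. unfold s0; lra. Qed.

Lemma r0_pos n a : (1 < n)%nat -> 3 < a -> 0 < r0 n a.
Proof. intros. unfold r0. pose proof (sn_pos n H). pose proof (s0_ge a H0).
  apply Rdiv_lt_0_compat; lra. Qed.

Lemma rr2_pos n A B : (1 < n)%nat -> fst A <> fst B -> 0 < rr2 n A B.
Proof. intros. unfold rr2. pose proof (sn_pos n H). apply Rdiv_lt_0_compat; [|lra].
  apply Rabs_pos_lt. lra. Qed.

Lemma cos_pi_n_le1 n : cos (PI / INR n) <= 1.
Proof. pose proof (COS_bound (PI / INR n)); lra. Qed.

Lemma interp_fst p q t : fst (interp p q t) = fst p + t * (fst q - fst p).
Proof. reflexivity. Qed.
Lemma interp_snd p q t : snd (interp p q t) = snd p + t * (snd q - snd p).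
Proof. reflexivity. Qed.

Lemma sq2 a b : 2 <= b \/ b <= -2 -> 4 <= a^2 + b^2.
Proof. intros H. pose proof (pow2_ge_0 a). destruct H; nra. Qed.

Lemma vert_below M h q t : 0 <= t <= 1 -> 0 <= h -> snd q <= snd M -> 4 <= d2 M q ->
  4 <= d2 (interp M (fst M, snd M + h) t) q.
Proof. intros Ht Hh Hq Hd. unfold d2 in *. rewrite interp_fst, interp_snd; simpl.
  replace (fst M + t * (fst M - fst M) - fst q) with (fst M - fst q) by ring.
  replace (snd M + t * (snd M + h - snd M) - snd q) with ((snd M - snd q) + t * h) by ring.
  assert (0 <= t * h) by (apply Rmult_le_pos; lra).
  assert (0 <= snd M - snd q) by lra.
  assert (((snd M - snd q) + t * h)^2 >= (snd M - snd q)^2) by nra. lra. Qed.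

Lemma above_D M D q t : 0 <= t <= 1 -> snd M <= snd D -> snd D + 2 <= snd q ->
  4 <= d2 (interp M D t) q.
Proof. intros Ht H1 H2. unfold d2. rewrite interp_fst, interp_snd.
  assert (snd M + t * (snd D - snd M) <= snd D) by nra. apply sq2; lra. Qed.

Lemma below_M M D q t : 0 <= t <= 1 -> snd M <= snd D -> snd q <= snd M - 2 ->
  4 <= d2 (interp M D t) q.
Proof. intros Ht H1 H2. unfold d2. rewrite interp_fst, interp_snd.
  assert (snd M <= snd M + t * (snd D - snd M)) by nra. apply sq2; lra. Qed.

Lemma horiz_away M d q t : 0 <= t <= 1 -> snd q = snd M -> 0 <= d * (fst M - fst q) -> 4 <= d2 M q ->
  4 <= d2 (interp M (fst M + d, snd M) t) q.
Proof. intros Ht Hy Hd H. unfold d2 in *. rewrite interp_fst, interp_snd; simpl.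
  rewrite Hy in *. replace (fst M + t * (fst M + d - fst M) - fst q) with ((fst M - fst q) + t * d) by ring.
  assert (0 <= t * (d * (fst M - fst q))) by (apply Rmult_le_pos; lra).
  replace (snd M + t * (snd M - snd M) - snd M) with 0 by ring.
  replace (snd M - snd M) with 0 in H by ring.
  assert (((fst M - fst q) + t * d)^2 >= (fst M - fst q)^2).
  { replace (((fst M - fst q) + t * d)^2) with ((fst M - fst q)^2 + 2 * (t * (d * (fst M - fst q))) + (t*d)^2) by ring.
    pose proof (pow2_ge_0 (t*d)). lra. }
  lra. Qed.

Lemma lam_lemma M D w t : 0 <= t <= 1 -> Rabs (fst D - fst M) <= snd D - snd M ->
  snd D <= snd w -> 36 <= d2 w D -> 4 <= d2 (interp M D t) w.
Proof.
  destruct M as [mx my], D as [dx dy], w as [wx wy]. unfold d2, interp; simpl.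
  intros Ht Hs Hw Hd.
  set (l := 1 - t).
  set (ux := wx - dx). set (uy := wy - dy).
  set (ex := l * (dx - mx)). set (ey := l * (dy - my)).
  assert (E1 : mx + t * (dx - mx) - wx = - (ux + ex)) by (unfold ux, ex, l; ring).
  assert (E2 : my + t * (dy - my) - wy = - (uy + ey)) by (unfold uy, ey, l; ring).
  rewrite E1, E2.
  assert (Hl : 0 <= l <= 1) by (unfold l; lra).
  assert (Huy : 0 <= uy) by (unfold uy; lra).
  assert (HH : 0 <= dy - my) by (pose proof (Rabs_pos (dx - mx)); lra).
  assert (Hey : 0 <= ey) by (unfold ey; apply Rmult_le_pos; lra).
  assert (Hex : Rabs ex <= ey) by (unfold ex, ey; rewrite Rabs_mult, Rabs_right by lra;
                                   apply Rmult_le_compat_l; lra).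
  assert (Hd' : 36 <= ux^2 + uy^2) by (unfold ux, uy; lra).
  replace ((- (ux + ex))^2) with ((ux + ex)^2) by ring.
  replace ((- (uy + ey))^2) with ((uy + ey)^2) by ring.
  destruct (Rle_dec 2 ey) as [Hb|Hb].
  - apply sq2. lra.
  - destruct (Rle_dec 2 uy) as [Hc|Hc].
    + apply sq2. lra.
    + assert (Hux : 32 <= ux^2) by nra.
      assert (Hax : Rabs ex < 2) by lra.
      apply Rabs_def2 in Hax. destruct Hax as [Ha1 Ha2].
      assert (H5 : 5 <= ux \/ ux <= -5).
      { destruct (Rle_dec 5 ux); [left; auto|]. destruct (Rle_dec ux (-5)); [right; auto|].
        exfalso. nra. }
      pose proof (pow2_ge_0 (uy + ey)).
      destruct H5; nra.
Qed.

Lemma mirror_safe c z z' : 1 <= fst z - c -> fst z' - c <= -1 -> 4 <= d2 z z'.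
Proof. intros. unfold d2. pose proof (pow2_ge_0 (snd z - snd z')). nra. Qed.

Lemma PtK_0 n pd : PtK n pd 0 = (pcx pd, pcy pd + pr pd).
Proof. unfold PtK. rewrite ang_0, sin_0, cos_0. apply pt_eq; simpl; ring. Qed.

Lemma pd1_PtK0 n a T : PtK n (pd1 n a T) 0 = T.
Proof. rewrite PtK_0. unfold pd1; simpl. destruct T; apply pt_eq; simpl; ring. Qed.

Lemma pd2_PtK n A B : (1 < n)%nat -> snd A = snd B ->
  PtK n (pd2 n A B) 1 = (Rmax (fst A) (fst B), snd A) /\ PtK n (pd2 n A B) (-1) = (Rmin (fst A) (fst B), snd A).
Proof.
  intros Hn Hy. pose proof (sn_pos n Hn) as Hs.
  assert (E : rr2 n A B * sin (PI / INR n) = Rabs (fst A - fst B) / 2).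
  { unfold rr2, sn in *. field. lra. }
  unfold PtK, pd2; simpl. rewrite ang_1.
  replace (ang n (-1)) with (- (PI / INR n)) by (unfold ang; simpl; unfold Rdiv; ring).
  rewrite sin_neg, cos_neg. split; apply pt_eq; simpl; try ring;
  unfold Rmax, Rmin; destruct (Rle_dec (fst A) (fst B)).
  - rewrite E, Rabs_left1 by lra. field.
  - rewrite E, Rabs_right by lra. field.
  - rewrite Ropp_mult_distr_r_reverse, E, Rabs_left1 by lra. field.
  - rewrite Ropp_mult_distr_r_reverse, E, Rabs_right by lra. field.
Qed.

Lemma pd2_anchor n A B : (1 < n)%nat -> snd A = snd B ->
  (PtK n (pd2 n A B) 1 = A /\ PtK n (pd2 n A B) (-1) = B) \/
  (PtK n (pd2 n A B) 1 = B /\ PtK n (pd2 n A B) (-1) = A).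
Proof.
  intros Hn Hy. destruct (pd2_PtK n A B Hn Hy) as [E1 E2]. rewrite E1, E2.
  unfold Rmax, Rmin. destruct (Rle_dec (fst A) (fst B)); [right|left]; split;
  destruct A, B; simpl in *; apply pt_eq; simpl; auto.
Qed.

Definition AF n a (S : pt -> Prop) pd y :=
  0 < pr pd /\ (pe pd = 0 \/ pe pd = 1)%Z /\ s0 a <= 2 * pr pd * sn n /\
  (forall q, S q -> snd q <= y) /\
  (forall v, Slot n pd v -> snd v <= y) /\
  (forall v, Slot n pd v -> snd v < y \/ S v) /\
  (forall q, S q -> snd q = y -> Slot n pd q) /\
  (forall v, Slot n pd v -> y - 2 * pr pd <= snd v) /\
  (forall v, Slot n pd v -> Rabs (fst v - pcx pd) <= pr pd) /\
  (forall v, Slot n pd v -> ~ S v -> fst v = pcx pd -> v = PtK n pd (Z.of_nat n)) /\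
  (forall c, sym S c -> c = pcx pd) /\
  (exists q, S q /\ snd q = y).

Lemma anch_AF n a S pd y : (1 < n)%nat -> 3 < a -> AnchPd n a S pd y -> AF n a S pd y.
Proof.
  intros Hn Ha HA. pose proof (sn_pos n Hn) as Hs. pose proof (s0_ge a Ha) as H6.
  destruct HA as [[T [[HT [Htop Huni]] [-> ->]]]|[A [B [[HAS [HBS [Hne [Hy [Htop Huni]]]]] [Hd [-> ->]]]]]].
  -
    pose proof (r0_pos n a Hn Ha) as Hr.
    assert (Hpr : pr (pd1 n a T) = r0 n a) by reflexivity.
    assert (Hpe : pe (pd1 n a T) = 0%Z) by reflexivity.
    assert (Hah : pcy (pd1 n a T) + pr (pd1 n a T) * cos (ang n (pe (pd1 n a T))) = snd T).
    { rewrite Hpe, ang_0, cos_0. unfold pd1; simpl. ring. }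
    assert (Hsl : forall v, Slot n (pd1 n a T) v -> snd v < snd T \/ v = T).
    { intros v Hv. destruct (slot_height n (pd1 n a T) v Hn ltac:(rewrite Hpr; lra) ltac:(rewrite Hpe; auto) Hv)
        as [H|[H|H]]; [left; rewrite <- Hah; auto|right|right]; rewrite H, Hpe; try rewrite Z.opp_0; apply pd1_PtK0. }
    split; [rewrite Hpr; auto|]. split; [rewrite Hpe; auto|]. split.
    { rewrite Hpr. unfold r0. right. field. lra. }
    split; [auto|]. split.
    { intros v Hv. destruct (Hsl v Hv) as [H| ->]; lra. }
    split.
    { intros v Hv. destruct (Hsl v Hv) as [H| ->]; [left|right]; auto. }
    split.
    { intros q Hq Hqy. rewrite (Huni q Hq Hqy). exists 0%Z. split.
      - exists 0%Z; simpl; lia.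
      - symmetry; apply pd1_PtK0. }
    split.
    { intros v Hv. destruct (slot_bounds n _ v ltac:(rewrite Hpr; lra) Hv) as [_ H].
      unfold pd1 in H; simpl in H. rewrite Hpr. lra. }
    split.
    { intros v Hv. apply (slot_bounds n _ v ltac:(rewrite Hpr; lra) Hv). }
    split.
    { intros v Hv HnS Hx. destruct (slot_axis n _ v Hn ltac:(rewrite Hpr; lra) Hv Hx) as [E|E]; auto.
      exfalso. rewrite E, pd1_PtK0 in HnS. auto. }
    split.
    { intros c Hc. specialize (Hc T HT). pose proof (Huni _ Hc eq_refl) as E.
      unfold refl in E. unfold pd1; simpl. destruct T; injection E; intros; simpl in *; lra. }
    exists T; auto.
  -
    assert (Hx : fst A <> fst B).
    { intro E. apply Hne. destruct A, B; simpl in *; subst; auto. }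
    pose proof (rr2_pos n A B Hn Hx) as Hr.
    assert (Hpr : pr (pd2 n A B) = rr2 n A B) by reflexivity.
    assert (Hpe : pe (pd2 n A B) = 1%Z) by reflexivity.
    assert (Hah : pcy (pd2 n A B) + pr (pd2 n A B) * cos (ang n (pe (pd2 n A B))) = snd A).
    { rewrite Hpe, ang_1. unfold pd2; simpl. ring. }
    assert (Hsl : forall v, Slot n (pd2 n A B) v -> snd v < snd A \/ v = A \/ v = B).
    { intros v Hv. destruct (slot_height n (pd2 n A B) v Hn ltac:(rewrite Hpr; lra) ltac:(rewrite Hpe; auto) Hv)
        as [H|[H|H]]; [left; rewrite <- Hah; auto| |]; right; rewrite H, Hpe;
      destruct (pd2_anchor n A B Hn Hy) as [[E1 E2]|[E1 E2]]; rewrite ?E1, ?E2; auto. }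
    assert (HslA : Slot n (pd2 n A B) A /\ Slot n (pd2 n A B) B).
    { assert (S1 : Slot n (pd2 n A B) (PtK n (pd2 n A B) 1)) by (exists 1%Z; split; auto; exists 0%Z; simpl; lia).
      assert (S2 : Slot n (pd2 n A B) (PtK n (pd2 n A B) (-1))) by (exists (-1)%Z; split; auto; exists (-1)%Z; simpl; lia).
      destruct (pd2_anchor n A B Hn Hy) as [[E1 E2]|[E1 E2]]; rewrite E1, E2 in *; auto. }
    split; [rewrite Hpr; auto|]. split; [rewrite Hpe; auto|]. split.
    { rewrite Hpr. unfold rr2. replace (2 * (Rabs (fst A - fst B) / (2 * sn n)) * sn n) with (Rabs (fst A - fst B))
        by (field; lra). auto. }
    split; [auto|]. split.
    { intros v Hv. destruct (Hsl v Hv) as [H|[->| ->]]; lra. }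
    split.
    { intros v Hv. destruct (Hsl v Hv) as [H|[->| ->]]; [left|right|right]; auto. }
    split.
    { intros q Hq Hqy. destruct (Huni q Hq Hqy) as [->| ->]; apply HslA. }
    split.
    { intros v Hv. destruct (slot_bounds n _ v ltac:(rewrite Hpr; lra) Hv) as [_ H].
      unfold pd2 in H; simpl in H. rewrite Hpr. pose proof (cos_pi_n_le1 n).
      assert (rr2 n A B * cos (PI / INR n) <= rr2 n A B) by nra. lra. }
    split.
    { intros v Hv. apply (slot_bounds n _ v ltac:(rewrite Hpr; lra) Hv). }
    split.
    { intros v Hv HnS Hxv. destruct (slot_axis n _ v Hn ltac:(rewrite Hpr; lra) Hv Hxv) as [E|E]; auto.
      exfalso. destruct (Hsl v Hv) as [H|[->| ->]]; auto.
      rewrite E, PtK_0 in H. unfold pd2 in H; simpl in H.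
      pose proof (cos_pi_n_le1 n). nra. }
    split.
    { intros c Hc. pose proof (Hc A HAS) as HcA. pose proof (Hc B HBS) as HcB.
      destruct (Huni _ HcA eq_refl) as [E|E]; unfold refl in E;
      destruct (Huni _ HcB ltac:(simpl; auto)) as [E'|E']; unfold refl in E';
      unfold pd2; simpl; destruct A as [xa ya], B as [xb yb]; simpl in *;
      injection E; injection E'; intros; subst; try lra; exfalso; apply Hne; f_equal; lra. }
    exists A; auto.
Qed.

Definition Cfg (S : pt -> Prop) := (forall p q, S p -> S q -> p <> q -> 4 <= d2 p q) /\
  (forall c1 c2, sym S c1 -> sym S c2 -> c1 = c2).

Lemma d2_sym p q : d2 p q = d2 q p.
Proof. unfold d2; ring. Qed.

Lemma refl_far S c M : Cfg S -> sym S c -> S M -> M <> refl c M -> 1 <= Rabs (fst M - c).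
Proof. intros [H4 _] Hs HM Hne. pose proof (H4 M (refl c M) HM (Hs M HM) Hne) as H.
  unfold d2, refl in H; simpl in H.
  replace (fst M - (2 * c - fst M)) with (2 * (fst M - c)) in H by ring.
  replace (snd M - snd M) with 0 in H by ring.
  destruct (Rle_dec 0 (fst M - c)); [rewrite Rabs_right by lra|rewrite Rabs_left by lra]; nra. Qed.

Lemma interp_same p t : interp p p t = p.
Proof. destruct p; unfold interp; simpl; apply pt_eq; simpl; ring. Qed.

Lemma interp_vert M Y t : interp M (fst M, Y) t = interp M (fst M, snd M + (Y - snd M)) t.
Proof. f_equal. f_equal. ring. Qed.

Lemma Good_AF n a S pd y W : (1 < n)%nat -> 3 < a -> Good n a S pd y W -> AF n a S pd y.
Proof. intros Hn Ha [HA _]. apply anch_AF; auto. Qed.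

Lemma vert_safe M Y q t : 0 <= t <= 1 -> snd M <= Y -> snd q <= snd M -> 4 <= d2 M q ->
  4 <= d2 (interp M (fst M, Y) t) q.
Proof. intros. rewrite interp_vert. apply vert_below; auto; lra. Qed.

Lemma notSep_bound n a S pd y W : Good n a S pd y W -> ~ Sep n S pd ->
  forall q, Crowd n S pd q -> snd q <= y - GW pd W.
Proof. intros [_ [_ [_ [_ HJ]]]] HnS q Hq. apply Rnot_lt_le. intro. apply HnS, HJ. eauto. Qed.

Lemma notSep_gap n S pd (M q0 : pt) : ~ Sep n S pd -> Crowd n S pd M ->
  (forall q, Crowd n S pd q -> snd q <= snd M) ->
  (forall q, Crowd n S pd q -> q <> M -> snd q <= snd q0) -> snd M - 2 <= snd q0.
Proof. intros HnS HM Hmax Hq0. apply Rnot_lt_le. intro Hlt. apply HnS. right. exists M.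
  split; auto. split; auto. intros q Hq Hgt. left. destruct (classic (q = M)); auto.
  specialize (Hq0 q Hq H). lra. Qed.

Lemma fill_geom n a S pd y W M D : (1 < n)%nat -> 3 < a -> Good n a S pd y W ->
  Crowd n S pd M -> Slot n pd D ->
  Rabs (fst D - fst M) <= snd D - snd M /\ snd M + 2 <= snd D.
Proof.
  intros Hn Ha HG HM HD. pose proof (Good_AF n a S pd y W Hn Ha HG) as AF.
  destruct AF as (Hr & _ & _ & _ & _ & _ & _ & Hlow & Hbx & _).
  destruct HG as (_ & HW & _ & Hcr & _).
  destruct (Hcr M HM) as [Hx Hy]. pose proof (Hlow D HD). pose proof (Hbx D HD).
  unfold GW in Hy.
  assert (Rabs (fst D - fst M) <= Rabs (fst D - pcx pd) + Rabs (fst M - pcx pd)).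
  { replace (fst D - fst M) with ((fst D - pcx pd) + - (fst M - pcx pd)) by ring.
    eapply Rle_trans; [apply Rabs_triang|]. rewrite Rabs_Ropp. lra. }
  split; lra.
Qed.

Lemma chord36 n a S pd y p q : (1 < n)%nat -> 3 < a -> AF n a S pd y -> Slot n pd p -> Slot n pd q -> p <> q ->
  36 <= d2 p q.
Proof. intros Hn Ha AF Hp Hq Hne. destruct AF as (Hr & _ & Hside & _).
  pose proof (chord n pd p q Hn Hp Hq Hne). pose proof (s0_ge a Ha). unfold sn in Hside.
  assert (0 <= 2 * pr pd * sin (PI / INR n)) by lra.
  assert ((2 * pr pd * sin (PI / INR n))^2 >= s0 a ^ 2) by nra. nra. Qed.

Lemma fill_side n a S pd y W c M D : (1 < n)%nat -> 3 < a -> Cfg S -> Good n a S pd y W -> sym S c ->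
  S M -> M <> refl c M -> Slot n pd D -> 0 < (fst D - c) * (fst M - c) ->
  forall t, 0 <= t <= 1 ->
  (1 <= fst (interp M D t) - c /\ 1 <= fst M - c) \/ (fst (interp M D t) - c <= -1 /\ fst M - c <= -1).
Proof.
  intros Hn Ha HC HG Hs HM Hne HD Hpos t Ht.
  pose proof (Good_AF n a S pd y W Hn Ha HG) as AF.
  pose proof AF as (_ & _ & _ & _ & _ & _ & _ & _ & _ & _ & Hax & _).
  pose proof (Hax c Hs) as Ec.
  pose proof (refl_far S c M HC Hs HM Hne) as HMc.
  assert (HDc : 1 <= Rabs (fst D - c)).
  { assert (HsD : Slot n pd (refl c D)) by (rewrite Ec; apply slot_refl; auto).
    assert (HneD : D <> refl c D).
    { intro E. assert (fst D = 2 * c - fst D) by (rewrite E at 1; reflexivity). nra. }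
    pose proof (chord36 n a S pd y D (refl c D) Hn Ha AF HD HsD HneD) as Hch.
    unfold d2, refl in Hch; simpl in Hch.
    replace (fst D - (2 * c - fst D)) with (2 * (fst D - c)) in Hch by ring.
    replace (snd D - snd D) with 0 in Hch by ring.
    destruct (Rle_dec 0 (fst D - c)); [rewrite Rabs_right by lra|rewrite Rabs_left by lra]; nra. }
  rewrite interp_fst.
  destruct (Rle_dec 0 (fst M - c)).
  - rewrite Rabs_right in HMc by lra.
    assert (0 < fst D - c) by (destruct (Rle_dec (fst D - c) 0); [nra|lra]).
    rewrite Rabs_right in HDc by lra. left. split; [nra|lra].
  - rewrite Rabs_left in HMc by lra.
    assert (fst D - c < 0) by (destruct (Rle_dec 0 (fst D - c)); [nra|lra]).
    rewrite Rabs_left in HDc by lra. right. split; [nra|lra].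
Qed.

Lemma sqx a b : 2 <= a \/ a <= -2 -> 4 <= a^2 + b^2.
Proof. intros H. pose proof (pow2_ge_0 b). destruct H; nra. Qed.

Lemma sgnR_prod x : 0 <= sgnR x * x.
Proof. unfold sgnR; destruct (Rle_dec 0 x); lra. Qed.

Lemma safe1 n a S m M D : (1 < n)%nat -> 3 < a -> Cfg S -> Spec0 n a S m M D ->
  forall q, S q -> q <> M -> forall t, 0 <= t <= 1 -> 4 <= d2 (interp M D t) q.
Proof.
  intros Hn Ha HC HS q Hq Hne t Ht.
  pose proof HC as [H4 _].
  assert (HMq : forall M', S M' -> M' <> q -> 4 <= d2 M' q) by (intros; apply H4; auto).
  destruct HS as [C|[C|[C|[C|[C|C]]]]].
  - destruct C as [_ [_ [HM [Htop ->]]]]. apply vert_safe; auto; lra.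
  - destruct C as [A [B [[HA [HB [_ [_ [Htop _]]]]] [_ [_ [-> ->]]]]]]. apply vert_safe; auto; lra.
  - destruct C as [A [B [[HA [HB [HAB [Hy [Htop _]]]]] [_ [Hel [_ [-> ->]]]]]]].
    destruct (classic (q = B)) as [->|HqB].
    + apply horiz_away; auto. rewrite Rmult_assoc. apply Rmult_le_pos; [pose proof (s0_ge a Ha); lra|apply sgnR_prod].
    + apply below_M; simpl; auto; lra.
  - destruct C as [A [B [W [Y [[HA [HB [_ [_ [Htop _]]]]] [_ [_ [-> [-> [HY _]]]]]]]]]].
    apply vert_safe; auto; lra.
  - destruct C as [T [W [Y [[HT [Htop _]] [_ [-> [-> [HY _]]]]]]]]. apply vert_safe; auto; lra.
  - destruct C as [pd [y [W [l [HG [HL C]]]]]].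
    pose proof (Good_AF n a S pd y W Hn Ha HG) as AF.
    pose proof AF as (Hr & _ & _ & _ & _ & _ & _ & Hlow & _).
    destruct C as [C|[C|C]].
    + destruct C as [_ [HnS [HM [Hmax [q0 [Hq0 [Hq0ne [Hq0m ->]]]]]]]].
      pose proof (notSep_gap n S pd M q0 HnS HM Hmax Hq0m) as Hgap.
      destruct (classic (Slot n pd q)) as [Hsq|Hsq].
      * apply above_D; simpl; auto; try lra.
        pose proof (notSep_bound n a S pd y W HG HnS q0 Hq0). pose proof (Hlow q Hsq).
        destruct HG as (_ & HW & _). unfold GW in *. lra.
      * apply vert_safe; [auto|simpl; lra|apply Hmax; split; auto|].
        apply HMq; [apply HM|intro; subst; auto].
    + destruct C as [_ [_ [HSep [HD [HnD [Hmaxv Hside]]]]]].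
      pose proof HSep as [HM [Hmax Habove]].
      destruct (fill_geom n a S pd y W M D Hn Ha HG HM HD) as [Hst Hup].
      destruct (classic (Slot n pd q)) as [Hsq|Hsq].
      * apply lam_lemma; auto.
        -- destruct HG as (_ & _ & Hpre & _). apply (Hpre q D); auto.
        -- apply (chord36 n a S pd y q D Hn Ha AF Hsq HD). intro; subst; auto.
      * destruct (Rlt_dec (snd M - 2) (snd q)) as [Hlt|Hge].
        -- destruct (Habove q (conj Hq Hsq) Hlt) as [E|[c [Hs E]]]; [contradiction|].
           subst q. assert (HneM : M <> refl c M) by (intro E; apply Hne; auto).
           destruct (fill_side n a S pd y W c M D Hn Ha HC HG Hs (proj1 HM) HneM HD (Hside c Hs HneM) t Ht)
             as [[H1 H2]|[H1 H2]]; unfold d2, refl; cbn [fst snd]; apply sqx; lra.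
        -- apply below_M; auto; lra.
    + destruct C as [_ [_ [HM ->]]]. rewrite interp_same. apply H4; auto.
Qed.

Lemma safe2 n a S m M D c : (1 < n)%nat -> 3 < a -> Cfg S -> Spec0 n a S m M D -> sym S c ->
  M <> refl c M -> forall t, 0 <= t <= 1 -> 1 <= Rabs (fst (interp M D t) - c).
Proof.
  intros Hn Ha HC HS Hs Hne t Ht.
  assert (Hv : forall Y, S M -> 1 <= Rabs (fst (interp M (fst M, Y) t) - c)).
  { intros Y HM. rewrite interp_fst. simpl. replace (fst M + t * (fst M - fst M)) with (fst M) by ring.
    apply (refl_far S c M HC Hs HM Hne). }
  destruct HS as [C|[C|[C|[C|[C|C]]]]].
  - destruct C as [_ [_ [HM [Htop ->]]]]. apply Hv; auto.
  - destruct C as [A [B [[HA _] [_ [_ [-> ->]]]]]]. apply Hv; auto.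
  - destruct C as [A [B [[HA [HB [HAB [Hy [Htop Huni]]]]] [_ [Hel [_ [-> ->]]]]]]].
    pose proof (Hs A HA) as HcA. destruct (Huni _ HcA eq_refl) as [E|E]; [exfalso; apply Hne; symmetry; auto|].
    assert (Ec : 2 * c - fst A = fst B) by (rewrite <- E; reflexivity).
    rewrite interp_fst; simpl.
    unfold sgnR. pose proof (s0_ge a Ha).
    assert (Hd4 : 4 <= (fst A - fst B)^2).
    { pose proof (proj1 HC A B HA HB HAB) as H4. unfold d2 in H4. rewrite Hy in H4.
      replace (snd B - snd B) with 0 in H4 by ring. lra. }
    assert (Ht2 : 0 <= t * s0 a) by (apply Rmult_le_pos; lra).
    destruct (Rle_dec 0 (fst A - fst B)).
    + assert (2 <= fst A - fst B) by nra.
      rewrite Rabs_right; nra.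
    + assert (fst A - fst B <= -2) by nra.
      rewrite Rabs_left; nra.
  - destruct C as [A [B [W [Y [[HA _] [_ [_ [-> [-> _]]]]]]]]]. apply Hv; auto.
  - destruct C as [T [W [Y [[HT _] [_ [-> [-> _]]]]]]]. apply Hv; auto.
  - destruct C as [pd [y [W [l [HG [HL C]]]]]].
    destruct C as [C|[C|C]].
    + destruct C as [_ [_ [HM [_ [q0 [_ [_ [_ ->]]]]]]]]. apply Hv. apply HM.
    + destruct C as [_ [_ [HSep [HD [HnD [Hmaxv Hside]]]]]].
      destruct (fill_side n a S pd y W c M D Hn Ha HC HG Hs (proj1 (proj1 HSep)) Hne HD (Hside c Hs Hne) t Ht)
        as [[H1 H2]|[H1 H2]]; [rewrite Rabs_right|rewrite Rabs_left]; lra.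
    + destruct C as [_ [_ [HM ->]]]. rewrite interp_same. apply (refl_far S c M HC Hs HM Hne).
Qed.

Definition pt_eq_dec (p q : pt) : {p = q} + {p <> q}.
Proof. destruct (excluded_middle_informative (p = q)); auto. Defined.

Lemma len_incl (l' l : list pt) : NoDup l' -> incl l' l -> (length l' <= length l)%nat.
Proof. intros. apply NoDup_incl_length; auto. Qed.

Lemma len_remove1 (l' l : list pt) M : NoDup l' -> (forall q, In q l' -> In q l /\ q <> M) -> In M l ->
  (length l' < length l)%nat.
Proof. intros Hn Hi HM. pose proof (remove_length_lt pt_eq_dec l M HM).
  assert (length l' <= length (remove pt_eq_dec M l))%nat; [|lia].
  apply len_incl; auto. intros q Hq. destruct (Hi q Hq). apply in_in_remove; auto. Qed.

Lemma len_remove2 (l' l : list pt) M M2 : NoDup l' ->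
  (forall q, In q l' -> In q l /\ q <> M /\ q <> M2) -> In M l -> In M2 l -> M <> M2 ->
  (length l' + 2 <= length l)%nat.
Proof. intros Hn Hi HM HM2 Hne.
  pose proof (remove_length_lt pt_eq_dec l M HM).
  assert (In M2 (remove pt_eq_dec M l)) by (apply in_in_remove; auto).
  pose proof (remove_length_lt pt_eq_dec _ M2 H0).
  assert (length l' <= length (remove pt_eq_dec M2 (remove pt_eq_dec M l)))%nat; [|lia].
  apply len_incl; auto. intros q Hq. destruct (Hi q Hq) as [A [B C]].
  apply in_in_remove; auto. apply in_in_remove; auto. Qed.

Lemma len_replace1 (l' l : list pt) M D : NoDup l' -> (forall q, In q l' -> q = D \/ (In q l /\ q <> M)) ->
  In M l -> (length l' <= length l)%nat.
Proof. intros Hn Hi HM. pose proof (remove_length_lt pt_eq_dec l M HM).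
  assert (length l' <= length (D :: remove pt_eq_dec M l))%nat; [|simpl in *; lia].
  apply len_incl; auto. intros q Hq. destruct (Hi q Hq) as [->|[A B]]; [left; auto|right].
  apply in_in_remove; auto. Qed.

Lemma len_replace2 (l' l : list pt) M M2 D D2 : NoDup l' ->
  (forall q, In q l' -> q = D \/ q = D2 \/ (In q l /\ q <> M /\ q <> M2)) ->
  In M l -> In M2 l -> M <> M2 -> (length l' <= length l)%nat.
Proof. intros Hn Hi HM HM2 Hne.
  pose proof (remove_length_lt pt_eq_dec l M HM).
  assert (In M2 (remove pt_eq_dec M l)) by (apply in_in_remove; auto).
  pose proof (remove_length_lt pt_eq_dec _ M2 H0).
  assert (length l' <= length (D :: D2 :: remove pt_eq_dec M2 (remove pt_eq_dec M l)))%nat; [|simpl in *; lia].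
  apply len_incl; auto. intros q Hq. destruct (Hi q Hq) as [->|[->|[A [B C]]]]; [left; auto|right; left; auto|].
  right; right. apply in_in_remove; auto. apply in_in_remove; auto. Qed.

Definition S1 (S : pt -> Prop) M D : pt -> Prop := fun q => q = D \/ (S q /\ q <> M).
Definition S2 (S : pt -> Prop) M D c : pt -> Prop :=
  fun q => q = D \/ q = refl c D \/ (S q /\ q <> M /\ q <> refl c M).

Definition FinS n (S : pt -> Prop) :=
  (forall C : pt -> Prop, exists l, NoDup l /\ forall q, In q l <-> (S q /\ C q)) /\
  (forall l, NoDup l -> (forall q, In q l -> S q) -> (length l <= n)%nat).

Lemma FinS_crowd n S pd : FinS n S -> exists l, CrowdList n S pd l /\ (length l <= n)%nat.
Proof. intros [H1 H2]. destruct (H1 (fun q => ~ Slot n pd q)) as [l [Hl Hin]].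
  exists l. split; [split; auto|]. apply H2; auto. intros q Hq; apply Hin; auto. Qed.

Lemma sym_S2 S M D c : sym S c -> sym (S2 S M D c) c.
Proof. intros Hs q [->|[->|[Hq [H1 H2]]]]; unfold S2.
  - right; left; auto.
  - left; apply refl_refl.
  - right; right. split; [apply Hs; auto|]. split.
    + intro E. apply H2. rewrite <- E, refl_refl; auto.
    + intro E. apply H1. rewrite <- (refl_refl c q), E, refl_refl; auto.
Qed.

Lemma AnchPd_mono n a (S S' : pt -> Prop) pd y : AnchPd n a S pd y ->
  (forall q, S q -> snd q = y -> S' q) -> (forall q, S' q -> S q \/ snd q < y) -> AnchPd n a S' pd y.
Proof.
  intros [[T [[HT [Htop Huni]] [-> ->]]]|[A [B [[HA [HB [Hne [Hy [Htop Huni]]]]] [Hd [-> ->]]]]]] Hk Hn.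
  - left. exists T. split; auto. split; [apply Hk; auto|]. split.
    + intros q Hq. destruct (Hn q Hq); [apply Htop; auto|lra].
    + intros q Hq Hqy. destruct (Hn q Hq); [apply Huni; auto|lra].
  - right. exists A, B. split; auto. split; [apply Hk; auto|]. split; [apply Hk; auto; lra|].
    split; auto. split; auto. split.
    + intros q Hq. destruct (Hn q Hq); [apply Htop; auto|lra].
    + intros q Hq Hqy. destruct (Hn q Hq); [apply Huni; auto|lra].
Qed.

Lemma refl_ne_x c M : M <> refl c M -> fst M <> c.
Proof. intros H E. apply H. unfold refl. destruct M; simpl in *; apply pt_eq; simpl; lra. Qed.

Lemma isA1_lift1 S M Y : (forall q, S q -> snd q <= snd M) -> snd M < Y -> isA1 (S1 S M (fst M, Y)) (fst M, Y).
Proof. intros Htop HY. split; [left; auto|]. split.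
  - intros q [->|[Hq _]]; simpl; [lra|]. specialize (Htop q Hq); lra.
  - intros q [->|[Hq _]] Hqy; auto. simpl in Hqy. specialize (Htop q Hq). lra. Qed.

Lemma dec_lift1 n a S M Y : (forall q, S q -> snd q <= snd M) -> snd M < Y ->
  RankIs n a (S1 S M (fst M, Y)) (2 * n + 2)%nat.
Proof. intros. right; right; right; right; left. exists (fst M, Y). split; auto. apply isA1_lift1; auto. Qed.

Lemma isA2_lift2 S M c Y : (forall q, S q -> snd q <= snd M) -> M <> refl c M -> snd M < Y ->
  isA2 (S2 S M (fst M, Y) c) (fst M, Y) (refl c (fst M, Y)).
Proof. intros Htop Hne HY. pose proof (refl_ne_x c M Hne) as Hx.
  split; [left; auto|]. split; [right; left; auto|]. split.
  { intro E. unfold refl in E. injection E; intros. simpl in *. lra. }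
  split; [reflexivity|]. split.
  - intros q [->|[->|[Hq _]]]; simpl; try lra. specialize (Htop q Hq); lra.
  - intros q [->|[->|[Hq _]]] Hqy; auto. simpl in Hqy. specialize (Htop q Hq). lra.
Qed.

Lemma dec_lift2 n a S M c Y : (forall q, S q -> snd q <= snd M) -> M <> refl c M -> snd M + 2 <= Y ->
  exists m', (m' <= 2 * n + 4)%nat /\ RankIs n a (S2 S M (fst M, Y) c) m'.
Proof. intros Htop Hne HY. pose proof (isA2_lift2 S M c Y Htop Hne ltac:(lra)) as HA.
  destruct (Rlt_dec (Rabs (fst (fst M, Y) - fst (refl c (fst M, Y)))) (s0 a)) as [Hl|Hl].
  - exists (2 * n + 4)%nat. split; [lia|]. right; right; left.
    exists (fst M, Y), (refl c (fst M, Y)). split; auto. split; auto. split; auto.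
    intros q [->|[->|[Hq _]]] H1 H2; try contradiction. simpl. specialize (Htop q Hq); lra.
  - exists (2 * n + 3)%nat. split; [lia|]. right; right; right; left.
    exists (fst M, Y), (refl c (fst M, Y)). split; auto. split; auto. apply Rnot_lt_le; auto.
Qed.

Lemma fresh_good n a S' pd Y W : (1 < n)%nat -> 3 < a -> AnchPd n a S' pd Y -> 0 <= W ->
  (forall q, S' q -> snd q = Y \/ (Rabs (fst q - pcx pd) <= W /\ snd q + GW pd W + 2 <= Y)) ->
  FinS n S' -> exists m', (m' <= 2 * n + 1)%nat /\ RankIs n a S' m'.
Proof.
  intros Hn Ha HA HW Hq HF.
  pose proof (anch_AF n a S' pd Y Hn Ha HA) as AF.
  pose proof AF as (Hr & _ & _ & Htop & Hsl & _ & Htsl & Hlow & _).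
  destruct (FinS_crowd n S' pd HF) as [l [HL Hlen]].
  exists (2 * length l + 1)%nat. split; [lia|].
  right; right; right; right; right. exists pd, Y, W, l, 1%nat.
  split; [|split; auto; split; [right; auto|split; [intro; lia|auto]]].
  unfold GW in *.
  split; auto. split; auto. split; [|split].
  - intros w v Hw Hv HSw HSv. destruct (Hq w HSw) as [E|[_ Hb]].
    + rewrite E. apply Hsl; auto.
    + exfalso. pose proof (Hlow w Hw). lra.
  - intros q [HSq Hns]. destruct (Hq q HSq) as [E|[Hb1 Hb2]].
    + exfalso. apply Hns. apply Htsl; auto.
    + split; auto. unfold GW; lra.
  - intros [q [[HSq Hns] Hlt]]. exfalso. unfold GW in Hlt. destruct (Hq q HSq) as [E|[Hb1 Hb2]].
    + apply Hns. apply Htsl; auto.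
    + lra.
Qed.

Lemma A2_refl S A B c : isA2 S A B -> sym S c -> A <> refl c A -> refl c A = B.
Proof. intros [HA [HB [Hne [Hy [Htop Huni]]]]] Hs HnA.
  destruct (Huni _ (Hs A HA) eq_refl) as [E|E]; auto. exfalso; apply HnA; auto. Qed.

Lemma A2_xne S A B : isA2 S A B -> fst A <> fst B.
Proof. intros [_ [_ [Hne [Hy _]]]] E. apply Hne. apply pt_eq; auto. Qed.

Lemma dec_c3 n a S A B : (1 < n)%nat -> 3 < a -> isA2 S A B ->
  let D := (fst A + s0 a * sgnR (fst A - fst B), snd A) in
  RankIs n a (S1 S A D) (2 * n + 3)%nat /\
  (forall c, sym S c -> A <> refl c A -> RankIs n a (S2 S A D c) (2 * n + 3)%nat).
Proof.
  intros Hn Ha HA2 D. pose proof (s0_ge a Ha) as Hs0.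
  pose proof HA2 as [HA [HB [Hne [Hy [Htop Huni]]]]].
  pose proof (A2_xne S A B HA2) as Hx.
  assert (HDx : Rabs (fst D - fst B) = Rabs (fst A - fst B) + s0 a).
  { unfold D, sgnR; simpl. destruct (Rle_dec 0 (fst A - fst B)).
    - rewrite !Rabs_right; lra.
    - rewrite !Rabs_left; lra. }
  split.
  - right; right; right; left. exists D, B. split; [|split; [rewrite HDx; pose proof (Rabs_pos (fst A - fst B)); lra|auto]].
    split; [left; auto|]. split; [right; split; auto|]. split.
    { intro E. rewrite E in HDx. rewrite Rminus_diag, Rabs_R0 in HDx. pose proof (Rabs_pos (fst A - fst B)); lra. }
    split; [unfold D; simpl; auto|]. split.
    + intros q [->|[Hq _]]; unfold D; simpl; [lra|]. apply Htop; auto.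
    + intros q [->|[Hq Hq2]] Hqy; [left; auto|]. unfold D in Hqy; simpl in Hqy.
      destruct (Huni q Hq Hqy); [contradiction|right; auto].
  - intros c Hs HnA. pose proof (A2_refl S A B c HA2 Hs HnA) as EB.
    assert (Ec : 2 * c - fst A = fst B) by (rewrite <- EB; reflexivity).
    assert (HDD : Rabs (fst D - fst (refl c D)) = Rabs (fst A - fst B) + 2 * s0 a).
    { unfold D, refl, sgnR; simpl. destruct (Rle_dec 0 (fst A - fst B)).
      - rewrite !Rabs_right; lra.
      - rewrite !Rabs_left; lra. }
    right; right; right; left. exists D, (refl c D).
    split; [|split; [rewrite HDD; pose proof (Rabs_pos (fst A - fst B)); lra|auto]].
    split; [left; auto|]. split; [right; left; auto|]. split.
    { intro E. rewrite <- E in HDD. rewrite Rminus_diag, Rabs_R0 in HDD. pose proof (Rabs_pos (fst A - fst B)); lra. }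
    split; [unfold D, refl; simpl; auto|]. split.
    + intros q [->|[->|[Hq _]]]; unfold D, refl; simpl; try lra. apply Htop; auto.
    + intros q [->|[->|[Hq [Hq1 Hq2]]]] Hqy; [left; auto|right; auto|]. unfold D in Hqy; simpl in Hqy.
      exfalso. destruct (Huni q Hq Hqy); [contradiction|]. apply Hq2. rewrite EB; auto.
Qed.

Lemma dec_c4 n a S A B W Y c : (1 < n)%nat -> 3 < a -> isA2 S A B -> s0 a <= Rabs (fst A - fst B) ->
  snd A < Y -> 0 <= W ->
  (forall q, S q -> q <> A -> q <> B ->
       Rabs (fst q - pcx (pd2 n A B)) <= W /\ snd q + GW (pd2 n A B) W + 2 <= Y) ->
  sym S c -> A <> refl c A -> FinS n (S2 S A (fst A, Y) c) ->
  exists m', (m' <= 2 * n + 1)%nat /\ RankIs n a (S2 S A (fst A, Y) c) m'.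
Proof.
  intros Hn Ha HA2 Hd HY HW Hq Hs HnA HF.
  pose proof HA2 as [HA [HB [Hne [Hy [Htop Huni]]]]].
  pose proof (A2_refl S A B c HA2 Hs HnA) as EB.
  assert (Ec : 2 * c - fst A = fst B) by (rewrite <- EB; reflexivity).
  set (D := (fst A, Y)).
  assert (ED : refl c D = (fst B, Y)) by (unfold D, refl; simpl; rewrite Ec; auto).
  assert (Hpcx : pcx (pd2 n D (refl c D)) = pcx (pd2 n A B)) by (rewrite ED; unfold pd2; simpl; auto).
  assert (Hpr : pr (pd2 n D (refl c D)) = pr (pd2 n A B)) by (rewrite ED; unfold pd2, rr2; simpl; auto).
  apply (fresh_good n a _ (pd2 n D (refl c D)) Y W Hn Ha); auto.
  - right. exists D, (refl c D). split; [apply isA2_lift2; auto|]. split; [|auto].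
    rewrite ED; unfold D; simpl; auto.
  - intros q [->|[->|[Hq1 [Hq2 Hq3]]]]; [left; auto|left; auto|].
    right. rewrite Hpcx. unfold GW. rewrite Hpr. apply Hq; auto. rewrite <- EB; auto.
Qed.

Lemma dec_c5 n a S T W Y : (1 < n)%nat -> 3 < a -> isA1 S T -> snd T < Y -> 0 <= W ->
  (forall q, S q -> q <> T -> Rabs (fst q - fst T) <= W /\ snd q + GW (pd1 n a T) W + 2 <= Y) ->
  FinS n (S1 S T (fst T, Y)) ->
  exists m', (m' <= 2 * n + 1)%nat /\ RankIs n a (S1 S T (fst T, Y)) m'.
Proof.
  intros Hn Ha HA1 HY HW Hq HF. pose proof HA1 as [HT [Htop Huni]].
  apply (fresh_good n a _ (pd1 n a (fst T, Y)) Y W Hn Ha); auto.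
  - left. exists (fst T, Y). split; [apply isA1_lift1; auto|]. split; auto.
  - intros q [->|[Hq1 Hq2]]; [left; auto|]. right. unfold GW, pd1; simpl. apply (Hq q Hq1 Hq2).
Qed.

Lemma crowd_below n a S pd y W q : (1 < n)%nat -> 3 < a -> Good n a S pd y W -> Crowd n S pd q -> snd q < y.
Proof. intros Hn Ha HG Hq. pose proof (Good_AF n a S pd y W Hn Ha HG) as AF.
  destruct AF as (Hr & _). destruct HG as (_ & HW & _ & Hb & _). destruct (Hb q Hq) as [_ H].
  unfold GW in H. lra. Qed.

Lemma crowd_refl n a S pd y W c q : (1 < n)%nat -> 3 < a -> Good n a S pd y W -> sym S c ->
  Crowd n S pd q -> Crowd n S pd (refl c q).
Proof. intros Hn Ha HG Hs [Hq Hns]. pose proof (Good_AF n a S pd y W Hn Ha HG) as AF.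
  pose proof AF as (_ & _ & _ & _ & _ & _ & _ & _ & _ & _ & Hax & _). pose proof (Hax c Hs) as ->.
  split; [apply Hs; auto|]. intro H. apply Hns. rewrite <- (refl_refl (pcx pd) q). apply slot_refl; auto. Qed.

Lemma dec_6a n a S pd y W l M q0 : (1 < n)%nat -> 3 < a -> Cfg S -> Good n a S pd y W ->
  CrowdList n S pd l -> ~ Sep n S pd -> Crowd n S pd M -> (forall q, Crowd n S pd q -> snd q <= snd M) ->
  Crowd n S pd q0 -> q0 <> M -> (forall q, Crowd n S pd q -> q <> M -> snd q <= snd q0) ->
  let D := (fst M, snd q0 + 2) in
  (FinS n (S1 S M D) -> exists m', (m' < 2 * length l + 1)%nat /\ RankIs n a (S1 S M D) m') /\
  (forall c, sym S c -> M <> refl c M -> FinS n (S2 S M D c) ->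
     exists m', (m' < 2 * length l + 1)%nat /\ RankIs n a (S2 S M D c) m').
Proof.
  intros Hn Ha HC HG HL HnS HM Hmax Hq0 Hq0M Hq0m D.
  pose proof (Good_AF n a S pd y W Hn Ha HG) as AF.
  pose proof AF as (Hr & _ & _ & Htop & Hsl & Hsly & Htsl & Hlow & Hbx & _ & Hax & _).
  pose proof HG as (HA & HW & Hpre & Hb & HJ).
  pose proof (notSep_bound n a S pd y W HG HnS) as Hcb.
  pose proof (Hcb q0 Hq0) as Hq0b.
  assert (HDy : snd D <= y - GW pd W + 2) by (unfold D; simpl; lra).
  assert (HDns : forall v, Slot n pd v -> snd v = snd D -> False).
  { intros v Hv E. pose proof (Hlow v Hv). unfold GW in *. lra. }
  assert (HMy : snd M < y) by (apply (crowd_below n a S pd y W); auto).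
  destruct HL as [HLnd HLin].
  split.
  - intros HF. destruct (FinS_crowd n _ pd HF) as [l1 [[Hl1nd Hl1in] Hl1len]].
    assert (Hc1 : forall q, Crowd n (S1 S M D) pd q -> q = D \/ (Crowd n S pd q /\ q <> M)).
    { intros q [[->|[Hq Hne]] Hns]; [left; auto|right; split; auto; split; auto]. }
    assert (HcD : Crowd n (S1 S M D) pd D).
    { split; [left; auto|]. intro Hs. apply (HDns D Hs eq_refl). }
    assert (HSep1 : Sep n (S1 S M D) pd).
    { right. exists D. split; auto. split.
      - intros q Hq. destruct (Hc1 q Hq) as [->|[Hq' Hne]]; [lra|]. specialize (Hq0m q Hq' Hne). unfold D; simpl; lra.
      - intros q Hq Hlt. left. destruct (Hc1 q Hq) as [->|[Hq' Hne]]; auto. specialize (Hq0m q Hq' Hne).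
        unfold D in Hlt; simpl in Hlt. lra. }
    exists (2 * length l1)%nat. split.
    + assert (length l1 <= length l)%nat; [|lia].
      apply (len_replace1 l1 l M D Hl1nd).
      * intros q Hq. apply Hl1in in Hq. destruct (Hc1 q Hq) as [->|[Hq' Hne]]; [left; auto|right].
        split; auto. apply HLin; auto.
      * apply HLin; auto.
    + right; right; right; right; right. exists pd, y, W, l1, 0%nat.
      split; [|split; [split; auto|split; [left; auto|split; [auto|lia]]]].
      split; [|split; [auto|split; [|split]]].
      * apply (AnchPd_mono n a S); auto.
        -- intros q Hq Hqy. right. split; auto. intro E; rewrite E in Hqy; lra.
        -- intros q [->|[Hq _]]; [right; unfold D in *; simpl in *; unfold GW in *; lra|left; auto].
      * intros w v Hw Hv [->|[HSw _]] HSv; [exfalso; apply (HDns D Hw eq_refl)|].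
        apply Hpre; auto. intro HSv'. apply HSv. right. split; auto. intro E; subst. apply (proj2 HM); auto.
      * intros q Hq. destruct (Hc1 q Hq) as [->|[Hq' Hne]]; [|apply Hb; auto].
        split; [unfold D; simpl; apply (Hb M HM)|auto].
      * intros _. auto.
  - intros c Hs HnM HF. destruct (FinS_crowd n _ pd HF) as [l2 [[Hl2nd Hl2in] Hl2len]].
    pose proof (Hax c Hs) as Ec.
    pose proof (crowd_refl n a S pd y W c M Hn Ha HG Hs HM) as HsM.
    set (sM := refl c M) in *.
    assert (HsMne : sM <> M) by (intro E; apply HnM; auto).
    assert (EsD : refl c D = (fst sM, snd q0 + 2)) by (unfold D, sM, refl; simpl; auto).
    assert (HsDy : snd (refl c D) = snd D) by reflexivity.
    assert (Hc2 : forall q, Crowd n (S2 S M D c) pd q -> q = D \/ q = refl c D \/ (Crowd n S pd q /\ q <> M /\ q <> sM)).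
    { intros q [[->|[->|[Hq [Hne1 Hne2]]]] Hns]; [left; auto|right; left; auto|right; right; split; auto; split; auto]. }
    assert (HcD : Crowd n (S2 S M D c) pd D).
    { split; [left; auto|]. intro Hsl'. apply (HDns D Hsl' eq_refl). }
    assert (HSep2 : Sep n (S2 S M D c) pd).
    { right. exists D. split; auto. split.
      - intros q Hq. destruct (Hc2 q Hq) as [->|[->|[Hq' [Hne _]]]]; [lra|rewrite HsDy; lra|].
        specialize (Hq0m q Hq' Hne). unfold D; simpl; lra.
      - intros q Hq Hlt. destruct (Hc2 q Hq) as [->|[->|[Hq' [Hne _]]]]; [left; auto|right; exists c; split; auto; apply sym_S2; auto|].
        specialize (Hq0m q Hq' Hne). unfold D in Hlt; simpl in Hlt. lra. }
    exists (2 * length l2)%nat. split.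
    + assert (length l2 <= length l)%nat; [|lia].
      apply (len_replace2 l2 l M sM D (refl c D) Hl2nd).
      * intros q Hq. apply Hl2in in Hq. destruct (Hc2 q Hq) as [->|[->|[Hq' [Hne1 Hne2]]]]; [left; auto|right; left; auto|].
        right; right. split; auto. apply HLin; auto.
      * apply HLin; auto.
      * apply HLin; auto.
      * intro E; apply HsMne; auto.
    + right; right; right; right; right. exists pd, y, W, l2, 0%nat.
      split; [|split; [split; auto|split; [left; auto|split; [auto|lia]]]].
      split; [|split; [auto|split; [|split]]].
      * apply (AnchPd_mono n a S); auto.
        -- intros q Hq Hqy. right; right. split; auto. split; intro E; rewrite E in Hqy.
           ++ lra.
           ++ pose proof (crowd_below n a S pd y W sM Hn Ha HG HsM) as Hb'. unfold sM in Hb'. lra.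
        -- intros q [->|[->|[Hq _]]]; [right; unfold D in *; simpl in *; unfold GW in *; lra
                                     |right; rewrite HsDy; unfold D in *; simpl in *; unfold GW in *; lra|left; auto].
      * intros w v Hw Hv [->|[->|[HSw _]]] HSv; [exfalso; apply (HDns D Hw eq_refl)|exfalso; apply (HDns _ Hw HsDy)|].
        apply Hpre; auto. intro HSv'. apply HSv. right; right. split; auto. split; intro E; subst.
        -- apply (proj2 HM); auto.
        -- apply (proj2 HsM); auto.
      * intros q Hq. destruct (Hc2 q Hq) as [->|[->|[Hq' _]]]; [| |apply Hb; auto].
        -- split; [unfold D; simpl; apply (Hb M HM)|auto].
        -- split; [|rewrite HsDy; auto]. rewrite EsD. simpl. unfold sM, refl; simpl. rewrite Ec.
           replace (2 * pcx pd - fst M - pcx pd) with (- (fst M - pcx pd)) by ring. rewrite Rabs_Ropp.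
           apply (Hb M HM).
      * intros _. auto.
Qed.

Lemma dec_6b n a S pd y W l M D : (1 < n)%nat -> 3 < a -> Cfg S -> Good n a S pd y W ->
  CrowdList n S pd l -> SepCT n S pd M -> Slot n pd D -> ~ S D ->
  (forall v, Slot n pd v -> ~ S v -> snd v <= snd D) ->
  (forall c, sym S c -> M <> refl c M -> 0 < (fst D - c) * (fst M - c)) ->
  (FinS n (S1 S M D) -> exists m', (m' < 2 * length l)%nat /\ RankIs n a (S1 S M D) m') /\
  (forall c, sym S c -> M <> refl c M -> FinS n (S2 S M D c) ->
     exists m', (m' < 2 * length l)%nat /\ RankIs n a (S2 S M D c) m').
Proof.
  intros Hn Ha HC HG HL HSep HD HnD Hmaxv Hside.
  pose proof (Good_AF n a S pd y W Hn Ha HG) as AF.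
  pose proof AF as (Hr & _ & _ & Htop & Hsl & Hsly & Htsl & Hlow & Hbx & _ & Hax & _).
  pose proof HG as (HA & HW & Hpre & Hb & HJ).
  pose proof HSep as [HM [Hmax Habove]].
  assert (HDy : snd D < y) by (destruct (Hsly D HD); [auto|contradiction]).
  assert (HMy : snd M < y) by (apply (crowd_below n a S pd y W); auto).
  assert (HMb : snd M <= y - GW pd W + 2) by (apply (Hb M HM)).
  destruct HL as [HLnd HLin].
  split.
  - intros HF. destruct (FinS_crowd n _ pd HF) as [l1 [[Hl1nd Hl1in] Hl1len]].
    assert (Hc1 : forall q, Crowd n (S1 S M D) pd q -> Crowd n S pd q /\ q <> M).
    { intros q [[->|[Hq Hne]] Hns]; [contradiction|split; auto; split; auto]. }
    exists (2 * length l1 + 1)%nat. split.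
    + assert (length l1 < length l)%nat; [|lia].
      apply (len_remove1 l1 l M Hl1nd).
      * intros q Hq. apply Hl1in in Hq. destruct (Hc1 q Hq). split; auto. apply HLin; auto.
      * apply HLin; auto.
    + right; right; right; right; right. exists pd, y, W, l1, 1%nat.
      split; [|split; [split; auto|split; [right; auto|split; [intro; lia|lia]]]].
      split; [|split; [auto|split; [|split]]].
      * apply (AnchPd_mono n a S); auto.
        -- intros q Hq Hqy. right. split; auto. intro E; rewrite E in Hqy; lra.
        -- intros q [->|[Hq _]]; [right; auto|left; auto].
      * intros w v Hw Hv [->|[HSw _]] HSv.
        -- apply Hmaxv; auto. intro HSv'. apply HSv. right. split; auto. intro E; subst. apply (proj2 HM); auto.
        -- apply Hpre; auto. intro HSv'. apply HSv. right. split; auto. intro E; subst. apply (proj2 HM); auto.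
      * intros q Hq. apply Hb. apply Hc1; auto.
      * intros [q [Hq Hlt]]. destruct (Hc1 q Hq) as [Hq' Hne].
        destruct (Rlt_dec (snd M - 2) (snd q)) as [Hl|Hl].
        -- destruct (Habove q Hq' Hl) as [E|[c [Hs E]]]; [contradiction|].
           right. exists q. split; auto. split.
           ++ intros q' Hq'2. destruct (Hc1 q' Hq'2). rewrite E. unfold refl; simpl. apply Hmax; auto.
           ++ intros q' Hq'2 Hl2. destruct (Hc1 q' Hq'2) as [Hq'3 Hne3]. left.
              rewrite E in Hl2; unfold refl in Hl2; simpl in Hl2.
              destruct (Habove q' Hq'3 Hl2) as [E2|[c' [Hs' E2]]]; [contradiction|].
              rewrite (proj2 HC c' c Hs' Hs) in E2. rewrite E2, E; auto.
        -- exfalso. lra.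
  - intros c Hs HnM HF. destruct (FinS_crowd n _ pd HF) as [l2 [[Hl2nd Hl2in] Hl2len]].
    pose proof (Hax c Hs) as Ec.
    pose proof (crowd_refl n a S pd y W c M Hn Ha HG Hs HM) as HsM.
    assert (HsMne : refl c M <> M) by (intro E; apply HnM; auto).
    assert (HsD : Slot n pd (refl c D)) by (rewrite Ec; apply slot_refl; auto).
    assert (HnsD : ~ S (refl c D)) by (intro H; apply HnD; rewrite <- (refl_refl c D); apply Hs; auto).
    assert (HsDy : snd (refl c D) = snd D) by reflexivity.
    assert (Hc2 : forall q, Crowd n (S2 S M D c) pd q -> Crowd n S pd q /\ q <> M /\ q <> refl c M).
    { intros q [[->|[->|[Hq [Hne1 Hne2]]]] Hns]; [contradiction|contradiction|split; auto; split; auto]. }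
    exists (2 * length l2 + 1)%nat. split.
    + assert (length l2 + 2 <= length l)%nat; [|lia].
      apply (len_remove2 l2 l M (refl c M) Hl2nd).
      * intros q Hq. apply Hl2in in Hq. destruct (Hc2 q Hq) as [A [B C]]. split; auto. apply HLin; auto.
      * apply HLin; auto.
      * apply HLin; auto.
      * intro E; apply HsMne; auto.
    + right; right; right; right; right. exists pd, y, W, l2, 1%nat.
      split; [|split; [split; auto|split; [right; auto|split; [intro; lia|lia]]]].
      split; [|split; [auto|split; [|split]]].
      * apply (AnchPd_mono n a S); auto.
        -- intros q Hq Hqy. right; right. split; auto. split; intro E; rewrite E in Hqy.
           ++ lra.
           ++ pose proof (crowd_below n a S pd y W _ Hn Ha HG HsM) as Hb'. lra.
        -- intros q [->|[->|[Hq _]]]; [right; auto|right; rewrite HsDy; auto|left; auto].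
      * assert (Hv' : forall v, Slot n pd v -> ~ S2 S M D c v -> ~ S v).
        { intros v Hv HSv HSv'. apply HSv. right; right. split; auto. split; intro E; subst.
          - apply (proj2 HM); auto.
          - apply (proj2 HsM); auto. }
        intros w v Hw Hv [->|[->|[HSw _]]] HSv.
        -- apply Hmaxv; auto.
        -- rewrite HsDy. apply Hmaxv; auto.
        -- apply Hpre; auto.
      * intros q Hq. apply Hb. apply Hc2; auto.
      * intros [q [Hq Hlt]]. exfalso. destruct (Hc2 q Hq) as [Hq' [Hne1 Hne2]].
        destruct (Rlt_dec (snd M - 2) (snd q)) as [Hl|Hl].
        -- destruct (Habove q Hq' Hl) as [E|[c' [Hs' E]]]; [contradiction|].
           rewrite (proj2 HC c' c Hs' Hs) in E. contradiction.
        -- lra.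
Qed.

Lemma dec_main n a S m M D : (1 < n)%nat -> 3 < a -> Cfg S -> Spec0 n a S m M D -> D <> M ->
  (FinS n (S1 S M D) -> exists m', (m' < m)%nat /\ RankIs n a (S1 S M D) m') /\
  (forall c, sym S c -> M <> refl c M -> FinS n (S2 S M D c) ->
     exists m', (m' < m)%nat /\ RankIs n a (S2 S M D c) m').
Proof.
  intros Hn Ha HC HS HDM.
  destruct HS as [C|[C|[C|[C|[C|C]]]]].
  - destruct C as [_ [-> [HM [Htop ->]]]]. split.
    + intros _. exists (2 * n + 2)%nat. split; [lia|]. apply dec_lift1; auto; lra.
    + intros c Hs HnM _. destruct (dec_lift2 n a S M c (snd M + 2) Htop HnM ltac:(lra)) as [m' [Hm' H]].
      exists m'; split; [lia|auto].
  - destruct C as [A [B [HA2 [_ [-> [-> ->]]]]]]. pose proof HA2 as [_ [_ [_ [_ [Htop _]]]]]. split.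
    + intros _. exists (2 * n + 2)%nat. split; [lia|]. apply dec_lift1; auto; lra.
    + intros c Hs HnM _. destruct (dec_lift2 n a S A c (snd A + 2) Htop HnM ltac:(lra)) as [m' [Hm' H]].
      exists m'; split; [lia|auto].
  - destruct C as [A [B [HA2 [_ [_ [-> [-> ->]]]]]]].
    destruct (dec_c3 n a S A B Hn Ha HA2) as [H1 H2]. split.
    + intros _. exists (2 * n + 3)%nat. split; [lia|auto].
    + intros c Hs HnM _. exists (2 * n + 3)%nat. split; [lia|auto].
  - destruct C as [A [B [W [Y [HA2 [Hd [-> [-> [-> [HY [HW Hq]]]]]]]]]]].
    pose proof HA2 as [_ [_ [_ [_ [Htop _]]]]]. split.
    + intros _. exists (2 * n + 2)%nat. split; [lia|]. apply dec_lift1; auto.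
    + intros c Hs HnM HF. destruct (dec_c4 n a S A B W Y c Hn Ha HA2 Hd HY HW Hq Hs HnM HF) as [m' [Hm' H]].
      exists m'; split; [lia|auto].
  - destruct C as [T [W [Y [HA1 [-> [-> [-> [HY [HW Hq]]]]]]]]]. split.
    + intros HF. destruct (dec_c5 n a S T W Y Hn Ha HA1 HY HW Hq HF) as [m' [Hm' H]].
      exists m'; split; [lia|auto].
    + intros c Hs HnM _. exfalso. destruct HA1 as [HT [Htop Huni]].
      apply HnM. symmetry. apply Huni; auto.
  - destruct C as [pd [y [W [l [HG [HL [C|[C|C]]]]]]]].
    + destruct C as [-> [HnS [HM [Hmax [q0 [Hq0 [Hq0M [Hq0m ->]]]]]]]].
      apply (dec_6a n a S pd y W l M q0); auto.
    + destruct C as [-> [_ [HSep [HD [HnD [Hmaxv Hside]]]]]].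
      apply (dec_6b n a S pd y W l M D); auto.
    + destruct C as [_ [_ [_ E]]]. contradiction.
Qed.

Lemma Cfg_of n Q : (0 < n)%nat -> no_overlap n Q -> Cfg (imgP n Q).
Proof. intros Hn H. split.
  - intros p q Hp Hq Hne. apply (no_overlap_d2 n Q); auto.
  - intros c1 c2 H1 H2. apply (sym_unique n Q); auto. Qed.

Lemma FinS_img n Q : no_overlap n Q -> FinS n (imgP n Q).
Proof. intros H. split.
  - intros C. apply fin_list. intros i j Hi Hj E. apply (no_overlap_inj n Q); auto.
  - intros l Hl Hin. apply (count_le n Q); auto. Qed.

Definition rfl (c : R) : iso := mkIso true (2 * c) 0.
Lemma app_rfl c q : app (rfl c) q = refl c q.
Proof. unfold app, rfl, refl; simpl. apply pt_eq; simpl; ring. Qed.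
Lemma inv_rfl c : inv (rfl c) = rfl c.
Proof. unfold inv, rfl; simpl. f_equal; ring. Qed.

Lemma img_rfl_S1 S c M D : sym S c ->
  img (rfl c) (S1 S M D) = S1 S (refl c M) (refl c D).
Proof. intros Hs. apply set_ext; intro q. unfold img. rewrite inv_rfl, app_rfl. unfold S1. split.
  - intros [E|[Hq Hne]].
    + left. rewrite <- E, refl_refl; auto.
    + right. split; [rewrite <- (refl_refl c q); apply Hs; auto|]. intro E; apply Hne. rewrite E, refl_refl; auto.
  - intros [E|[Hq Hne]].
    + left. rewrite E, refl_refl; auto.
    + right. split; [apply Hs; auto|]. intro E; apply Hne. rewrite <- E, refl_refl; auto.
Qed.

Lemma img_S1 n Q Q' i0 M D : no_overlap n Q -> (i0 < n)%nat -> Q i0 = M -> Q' i0 = D ->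
  (forall j, (j < n)%nat -> j <> i0 -> Q' j = Q j) -> imgP n Q' = S1 (imgP n Q) M D.
Proof. intros Hno Hi0 HM HD Hfix. apply set_ext; intro q. unfold imgP, S1. split.
  - intros [j [Hj ->]]. destruct (Nat.eq_dec j i0) as [->|Ne]; [left; auto|right].
    rewrite Hfix by auto. split; [exists j; auto|]. intro E. rewrite <- HM in E.
    apply (no_overlap_inj n Q) in E; auto.
  - intros [->|[[j [Hj ->]] Hne]]; [exists i0; auto|].
    exists j. split; auto. destruct (Nat.eq_dec j i0) as [->|Ne]; [exfalso; auto|]. rewrite Hfix; auto.
Qed.

Lemma img_S2 n Q Q' i0 i1 M D c : no_overlap n Q -> (i0 < n)%nat -> (i1 < n)%nat -> i0 <> i1 ->
  Q i0 = M -> Q i1 = refl c M -> Q' i0 = D -> Q' i1 = refl c D ->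
  (forall j, (j < n)%nat -> j <> i0 -> j <> i1 -> Q' j = Q j) -> imgP n Q' = S2 (imgP n Q) M D c.
Proof. intros Hno Hi0 Hi1 Hne01 HM HsM HD HsD Hfix. apply set_ext; intro q. unfold imgP, S2. split.
  - intros [j [Hj ->]]. destruct (Nat.eq_dec j i0) as [->|N0]; [left; auto|].
    destruct (Nat.eq_dec j i1) as [->|N1]; [right; left; auto|]. right; right.
    rewrite Hfix by auto. split; [exists j; auto|]. split; intro E.
    + rewrite <- HM in E. apply (no_overlap_inj n Q) in E; auto.
    + rewrite <- HsM in E. apply (no_overlap_inj n Q) in E; auto.
  - intros [->|[->|[[j [Hj ->]] [Hn0 Hn1]]]]; [exists i0; auto|exists i1; auto|].
    exists j. split; auto. destruct (Nat.eq_dec j i0) as [->|N0]; [exfalso; auto|].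
    destruct (Nat.eq_dec j i1) as [->|N1]; [exfalso; auto|]. rewrite Hfix; auto.
Qed.

Lemma interp_refl c p q t : interp (refl c p) (refl c q) t = refl c (interp p q t).
Proof. unfold interp, refl; simpl. apply pt_eq; simpl; ring. Qed.

Lemma d2_refl c z w : d2 (refl c z) w = d2 z (refl c w).
Proof. unfold d2, refl; simpl. ring. Qed.

Lemma d2_self_refl c z : d2 z (refl c z) = (2 * (fst z - c))^2.
Proof. unfold d2, refl; simpl. ring. Qed.

Lemma core_cfm n a Q Q' m M D : (1 < n)%nat -> 3 < a -> no_overlap n Q ->
  Spec0 n a (imgP n Q) m M D -> Mv n (imgP n Q) Q Q' M D -> collision_free_move n Q Q'.
Proof.
  intros Hn Ha Hno HS HMv. set (S := imgP n Q) in *.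
  pose proof (Cfg_of n Q ltac:(lia) Hno) as HC. fold S in HC.
  assert (HinS : forall i, (i < n)%nat -> S (Q i)) by (intros i Hi; exists i; auto).
  assert (Hd : forall i j, (i < n)%nat -> (j < n)%nat -> i <> j -> Q i <> Q j).
  { intros i j Hi Hj Hij E. apply Hij. apply (no_overlap_inj n Q); auto. }
  assert (Tr : forall i t, (i < n)%nat ->
     (interp (Q i) (Q' i) t = Q i) \/ (Q i = M /\ interp (Q i) (Q' i) t = interp M D t) \/
     (exists c, sym S c /\ Q i = refl c M /\ interp (Q i) (Q' i) t = refl c (interp M D t))).
  { intros i t Hi. destruct (HMv i Hi) as [E|[[E1 E2]|[c [Hs [E1 E2]]]]].
    - left. rewrite E. apply interp_same.
    - right; left. rewrite E1, E2. auto.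
    - right; right. exists c. split; auto. split; auto. rewrite E1, E2. apply interp_refl. }
  intros t Ht i j Hi Hj Hij. apply dist_ge2.
  assert (Hqi : forall q, S q -> q <> M -> 4 <= d2 (interp M D t) q) by (intros; apply (safe1 n a S m M D); auto).
  destruct (Tr i t Hi) as [Ei|[[Mi Ei]|[ci [Hsi [Mi Ei]]]]];
  destruct (Tr j t Hj) as [Ej|[[Mj Ej]|[cj [Hsj [Mj Ej]]]]]; rewrite Ei, Ej.
  - apply dist_ge2_inv. apply Hno; auto.
  - rewrite d2_sym. apply Hqi; auto. rewrite <- Mj. apply Hd; auto.
  - rewrite d2_sym, d2_refl. apply Hqi; [apply Hsj; auto|]. intro E. apply (Hd i j Hi Hj Hij).
    rewrite Mj, <- E, refl_refl; auto.
  - apply Hqi; auto. rewrite <- Mi. apply Hd; auto.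
  - exfalso. apply (Hd i j Hi Hj Hij). congruence.
  - destruct (classic (M = refl cj M)) as [E|Ne].
    + exfalso. apply (Hd i j Hi Hj Hij). rewrite Mi, Mj; auto.
    + rewrite d2_self_refl. pose proof (safe2 n a S m M D cj Hn Ha HC HS Hsj Ne t Ht) as H.
      destruct (Rle_dec 0 (fst (interp M D t) - cj)); [rewrite Rabs_right in H by lra|rewrite Rabs_left in H by lra]; nra.
  - rewrite d2_refl. apply Hqi; [apply Hsi; auto|]. intro E. apply (Hd i j Hi Hj Hij).
    rewrite Mi, <- E, refl_refl; auto.
  - destruct (classic (M = refl ci M)) as [E|Ne].
    + exfalso. apply (Hd i j Hi Hj Hij). rewrite Mi, Mj; auto.
    + rewrite d2_sym, d2_self_refl. pose proof (safe2 n a S m M D ci Hn Ha HC HS Hsi Ne t Ht) as H.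
      destruct (Rle_dec 0 (fst (interp M D t) - ci)); [rewrite Rabs_right in H by lra|rewrite Rabs_left in H by lra]; nra.
  - exfalso. apply (Hd i j Hi Hj Hij). rewrite Mi, Mj. rewrite (proj2 HC ci cj Hsi Hsj). auto.
Qed.

Lemma Spec0_SM n a S m M D : Spec0 n a S m M D -> S M.
Proof.
  intros [C|[C|[C|[C|[C|C]]]]].
  - destruct C as [_ [_ [HM _]]]; auto.
  - destruct C as [A [B [[HA _] [_ [_ [-> _]]]]]]; auto.
  - destruct C as [A [B [[HA _] [_ [_ [_ [-> _]]]]]]]; auto.
  - destruct C as [A [B [W [Y [[HA _] [_ [_ [-> _]]]]]]]]; auto.
  - destruct C as [T [W [Y [[HT _] [_ [-> _]]]]]]; auto.
  - destruct C as [pd [y [W [l [HG [HL [C|[C|C]]]]]]]].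
    + destruct C as [_ [_ [[HM _] _]]]; auto.
    + destruct C as [_ [_ [[[HM _] _] _]]]; auto.
    + destruct C as [_ [_ [HM _]]]; auto.
Qed.

Lemma core_rank n a Q Q' m M D : (1 < n)%nat -> 3 < a -> no_overlap n Q -> no_overlap n Q' ->
  Spec0 n a (imgP n Q) m M D -> Mv n (imgP n Q) Q Q' M D ->
  (forall i, (i < n)%nat -> Q' i = Q i) \/
  exists m' g, (m' < m)%nat /\ RankIs n a (imgP n (mapc g Q')) m'.
Proof.
  intros Hn Ha Hno Hno' HS HMv. set (S := imgP n Q) in *.
  pose proof (Cfg_of n Q ltac:(lia) Hno) as HC. fold S in HC.
  destruct (classic (forall i, (i < n)%nat -> Q' i = Q i)) as [H|H]; [left; auto|right].
  apply not_all_ex_not in H. destruct H as [i1 H1].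
  apply imply_to_and in H1. destruct H1 as [Hi1 Hch1].
  assert (Hd : forall i j, (i < n)%nat -> (j < n)%nat -> Q i = Q j -> i = j)
    by (intros; apply (no_overlap_inj n Q); auto).
  assert (Hch : forall j, (j < n)%nat -> Q' j <> Q j ->
     (Q j = M /\ Q' j = D) \/ (exists c, sym S c /\ Q j = refl c M /\ Q' j = refl c D)).
  { intros j Hj Hne. destruct (HMv j Hj) as [E|[E|E]]; [contradiction|left; auto|right; auto]. }
  assert (HDM : D <> M).
  { intro E. destruct (Hch i1 Hi1 Hch1) as [[E1 E2]|[c [_ [E1 E2]]]]; apply Hch1; congruence. }
  destruct (dec_main n a S m M D Hn Ha HC HS HDM) as [Hdec1 Hdec2].
  assert (HF : forall g, FinS n (imgP n (mapc g Q'))) by (intro g; apply FinS_img; apply no_overlap_map; auto).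
  assert (HSM : S M) by (apply (Spec0_SM n a S m M D); auto).
  destruct HSM as [iM [HiM EM]]. symmetry in EM.
  assert (Hid : forall X, imgP n Q' = X -> imgP n (mapc idi Q') = X).
  { intros X E. rewrite <- img_imgP, img_id; auto. }
  assert (Fin1 : forall g, imgP n (mapc g Q') = S1 S M D ->
            exists m' g, (m' < m)%nat /\ RankIs n a (imgP n (mapc g Q')) m').
  { intros g E. destruct (Hdec1 ltac:(rewrite <- E; apply HF)) as [m' [Hm' HR]].
    exists m', g. split; auto. rewrite E; auto. }
  assert (Hrf : forall c M' D', sym S c -> imgP n Q' = S1 S M' D' ->
            imgP n (mapc (rfl c) Q') = S1 S (refl c M') (refl c D')).
  { intros c M' D' Hs E. rewrite <- img_imgP, E. apply img_rfl_S1; auto. }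
  destruct (classic (exists c, sym S c)) as [[c Hs]|Hns].
  - set (sM := refl c M).
    destruct (classic (M = sM)) as [EsM|NsM].
    +
      assert (Hfix : forall j, (j < n)%nat -> j <> iM -> Q' j = Q j).
      { intros j Hj Hne. destruct (classic (Q' j = Q j)) as [E|E]; auto. exfalso.
        destruct (Hch j Hj E) as [[E1 _]|[c' [Hs' [E1 _]]]].
        - apply Hne. apply Hd; auto. congruence.
        - rewrite (proj2 HC c' c Hs' Hs) in E1. apply Hne. apply Hd; auto. rewrite E1, EM. auto. }
      assert (Hi1M : i1 = iM) by (destruct (Nat.eq_dec i1 iM); auto; exfalso; apply Hch1; apply Hfix; auto).
      subst i1.
      destruct (Hch iM HiM Hch1) as [[_ E2]|[c' [Hs' [_ E2]]]].
      * apply (Fin1 idi). apply Hid. apply (img_S1 n Q Q' iM M D Hno HiM EM E2 Hfix).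
      * rewrite (proj2 HC c' c Hs' Hs) in E2.
        pose proof (Hrf c M (refl c D) Hs (img_S1 n Q Q' iM M (refl c D) Hno HiM EM E2 Hfix)) as E3.
        rewrite refl_refl in E3. fold sM in E3. rewrite <- EsM in E3.
        apply (Fin1 (rfl c)). auto.
    +
      assert (HsS : S sM) by (apply Hs; exists iM; auto).
      destruct HsS as [is [His Es]]. symmetry in Es.
      assert (Hne : iM <> is) by (intro E; subst; apply NsM; congruence).
      assert (Hfix : forall j, (j < n)%nat -> j <> iM -> j <> is -> Q' j = Q j).
      { intros j Hj N1 N2. destruct (classic (Q' j = Q j)) as [E|E]; auto. exfalso.
        destruct (Hch j Hj E) as [[E1 _]|[c' [Hs' [E1 _]]]].
        - apply N1. apply Hd; auto. congruence.
        - rewrite (proj2 HC c' c Hs' Hs) in E1. apply N2. apply Hd; auto. rewrite E1, Es. auto. }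
      assert (HchM : Q' iM <> Q iM -> Q' iM = D).
      { intro E. destruct (Hch iM HiM E) as [[_ E2]|[c' [Hs' [E1 _]]]]; auto.
        rewrite (proj2 HC c' c Hs' Hs) in E1. exfalso. apply NsM. rewrite <- EM. auto. }
      assert (Hchs : Q' is <> Q is -> Q' is = refl c D).
      { intro E. destruct (Hch is His E) as [[E1 _]|[c' [Hs' [_ E2]]]].
        - exfalso. apply NsM. rewrite <- E1, Es. auto.
        - rewrite (proj2 HC c' c Hs' Hs) in E2. auto. }
      destruct (classic (Q' iM = Q iM)) as [UM|CM]; destruct (classic (Q' is = Q is)) as [Us|Cs].
      * exfalso. apply Hch1. destruct (Nat.eq_dec i1 iM) as [->|N1]; auto.
        destruct (Nat.eq_dec i1 is) as [->|N2]; auto.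
      *
        assert (Hfix' : forall j, (j < n)%nat -> j <> is -> Q' j = Q j).
        { intros j Hj N. destruct (Nat.eq_dec j iM) as [->|N1]; auto. }
        pose proof (Hrf c sM (refl c D) Hs (img_S1 n Q Q' is sM (refl c D) Hno His Es (Hchs Cs) Hfix')) as E3.
        unfold sM in E3. rewrite !refl_refl in E3.
        apply (Fin1 (rfl c)). auto.
      * assert (Hfix' : forall j, (j < n)%nat -> j <> iM -> Q' j = Q j).
        { intros j Hj N. destruct (Nat.eq_dec j is) as [->|N1]; auto. }
        apply (Fin1 idi). apply Hid. apply (img_S1 n Q Q' iM M D Hno HiM EM (HchM CM) Hfix').
      * assert (E : imgP n (mapc idi Q') = S2 S M D c) by
          (apply Hid; apply (img_S2 n Q Q' iM is M D c Hno HiM His Hne EM Es (HchM CM) (Hchs Cs) Hfix)).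
        destruct (Hdec2 c Hs NsM ltac:(rewrite <- E; apply HF)) as [m' [Hm' HR]]. exists m', idi. split; auto.
        rewrite E; auto.
  -
    assert (Hfix : forall j, (j < n)%nat -> j <> iM -> Q' j = Q j).
    { intros j Hj Hne. destruct (classic (Q' j = Q j)) as [E|E]; auto. exfalso.
      destruct (Hch j Hj E) as [[E1 _]|[c' [Hs' _]]].
      - apply Hne. apply Hd; auto. congruence.
      - apply Hns. eauto. }
    assert (Hi1M : i1 = iM) by (destruct (Nat.eq_dec i1 iM); auto; exfalso; apply Hch1; apply Hfix; auto).
    subst i1.
    destruct (Hch iM HiM Hch1) as [[_ E2]|[c' [Hs' _]]]; [|exfalso; apply Hns; eauto].
    apply (Fin1 idi). apply Hid. apply (img_S1 n Q Q' iM M D Hno HiM EM E2 Hfix).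
Qed.

Lemma notSep_gap' n S pd (M q0 : pt) : ~ Sep n S pd -> Crowd n S pd M ->
  (forall q, Crowd n S pd q -> snd q <= snd M) ->
  (forall q, Crowd n S pd q -> q <> M -> snd q <= snd q0) -> snd M - 2 < snd q0.
Proof. intros HnS HM Hmax Hq0. apply Rnot_le_lt. intro Hle. apply HnS. right. exists M.
  split; auto. split; auto. intros q Hq Hgt. left. destruct (classic (q = M)); auto.
  specialize (Hq0 q Hq H). lra. Qed.

Lemma prog_ok n a Q m M D : (1 < n)%nat -> 3 < a -> Spec0 n a (imgP n Q) m M D ->
  (exists i, (i < n)%nat /\ Q i = M) /\ ((0 < m)%nat -> D <> M).
Proof.
  intros Hn Ha HS. split.
  { destruct (Spec0_SM n a _ m M D HS) as [i [Hi E]]. exists i; auto. }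
  intros Hm E. pose proof (s0_ge a Ha).
  destruct HS as [C|[C|[C|[C|[C|C]]]]].
  - destruct C as [_ [_ [_ [_ ->]]]]. destruct M; injection E; lra.
  - destruct C as [A [B [_ [_ [_ [-> ->]]]]]]. destruct A; injection E; lra.
  - destruct C as [A [B [_ [_ [_ [_ [-> ->]]]]]]].
    pose proof (f_equal fst E) as E1. simpl in E1.
    unfold sgnR in E1. destruct (Rle_dec 0 (fst A - fst B)); lra.
  - destruct C as [A [B [W [Y [_ [_ [_ [-> [-> [HY _]]]]]]]]]]. destruct A; injection E; simpl in *; lra.
  - destruct C as [T [W [Y [_ [_ [-> [-> [HY _]]]]]]]]. destruct T; injection E; simpl in *; lra.
  - destruct C as [pd [y [W [l [HG [HL [C|[C|C]]]]]]]].
    + destruct C as [_ [HnS [HM [Hmax [q0 [Hq0 [Hq0M [Hq0m ->]]]]]]]].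
      pose proof (notSep_gap' n _ pd M q0 HnS HM Hmax Hq0m).
      destruct M; injection E; simpl in *; lra.
    + destruct C as [_ [_ [[[HM _] _] [_ [HnD _]]]]]. subst. contradiction.
    + destruct C as [-> _]. lia.
Qed.

Lemma cover_ok n a Q : (1 < n)%nat -> no_overlap n Q -> exists m, RankIs n a (imgP n Q) m.
Proof.
  intros Hn Hno. set (S := imgP n Q).
  destruct (max_P n Q (fun _ => True) snd) as [T [HT [_ Htop]]].
  { exists (Q 0%nat). split; auto. exists 0%nat; split; auto; lia. }
  fold S in HT, Htop.
  assert (Htop' : forall q, S q -> snd q <= snd T) by (intros; apply Htop; auto).
  destruct (classic (exists B, S B /\ B <> T /\ snd B = snd T)) as [[B [HB [HBT HBy]]]|HnB].
  - destruct (classic (exists C, S C /\ C <> T /\ C <> B /\ snd C = snd T)) as [[C [HC [HCT [HCB HCy]]]]|HnC].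
    + exists (2 * n + 6)%nat. left. split; auto. exists T, B, C.
      repeat split; auto; try congruence.
    + assert (HA2 : isA2 S T B).
      { split; auto. split; auto. split; [congruence|]. split; [auto|]. split; auto.
        intros q Hq Hqy. destruct (classic (q = T)); [left; auto|]. destruct (classic (q = B)); [right; auto|].
        exfalso; apply HnC; exists q; auto. }
      destruct (Rlt_dec (Rabs (fst T - fst B)) (s0 a)).
      * exists (2 * n + 5)%nat. right; left. exists T, B. auto.
      * exists (2 * n + 3)%nat. right; right; right; left. exists T, B. split; auto. split; auto. lra.
  - exists (2 * n + 2)%nat. right; right; right; right; left. exists T. split; auto.
    split; auto. split; auto. intros q Hq Hqy. destruct (classic (q = T)); auto. exfalso; apply HnB; eauto.
Qed.

Definition pdmap (h : iso) (pd : poly) : poly :=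
  mkPoly (sg (fl h) * pcx pd + tx h) (pcy pd + ty h) (pr pd) (pe pd).

Lemma slot_iso n h pd q : Slot n pd q -> Slot n (pdmap h pd) (app h q).
Proof.
  intros [K [[j Hj] E]]. subst q.
  destruct h as [[] t u]; unfold app, pdmap, PtK; simpl.
  - exists (- K)%Z. split; [exists (- j - pe pd)%Z; unfold pdmap; cbn [pe]; lia|].
    unfold PtK; simpl. unfold ang. rewrite opp_IZR.
    replace (- IZR K * PI / INR n) with (- (IZR K * PI / INR n)) by (unfold Rdiv; ring).
    rewrite sin_neg, cos_neg. apply pt_eq; simpl; ring.
  - exists K. split; [exists j; unfold pdmap; cbn [pe]; lia|]. unfold PtK; simpl. apply pt_eq; simpl; ring.
Qed.

Lemma final_ok n a Q g : (1 < n)%nat -> 3 < a -> no_overlap n Q ->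
  RankIs n a (imgP n (mapc g Q)) 0%nat -> uniform_circle n a Q.
Proof.
  intros Hn Ha Hno HR.
  destruct HR as [[_ E]|[[A [B [_ [_ E]]]]|[[A [B [_ [_ [_ E]]]]]|[[A [B [_ [_ E]]]]|[[T [_ E]]|C]]]]];
    try lia.
  destruct C as [pd [y [W [l [b [HG [[Hlnd Hlin] [_ [_ E]]]]]]]]].
  assert (Hl : l = nil) by (destruct l; simpl in E; [auto|lia]). subst l.
  pose proof (Good_AF n a _ pd y W Hn Ha HG) as AF.
  destruct AF as (Hr & He & Hside & _).
  assert (Hall : forall i, (i < n)%nat -> Slot n (pdmap (inv g) pd) (Q i)).
  { intros i Hi. rewrite <- (app_inv_l g (Q i)). apply slot_iso.
    destruct (classic (Slot n pd (app g (Q i)))) as [H|H]; auto. exfalso.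
    apply (proj2 (Hlin (app g (Q i)))). split; auto. exists i; split; auto. }
  set (pd' := pdmap (inv g) pd).
  assert (Hex : forall i, (i < n)%nat -> exists k, (k < n)%nat /\ Q i = V n pd' k).
  { intros i Hi. apply slot_V; auto. }
  set (s := fun i => epsilon (inhabits 0%nat) (fun k => (k < n)%nat /\ Q i = V n pd' k)).
  assert (Hs : forall i, (i < n)%nat -> (s i < n)%nat /\ Q i = V n pd' (s i)).
  { intros i Hi. apply (epsilon_spec (inhabits 0%nat) (fun k => (k < n)%nat /\ Q i = V n pd' k)). auto. }
  exists (pcx pd', pcy pd'), (pr pd'), (PI / 2 - IZR (pe pd') * PI / INR n), s.
  split; [unfold pd', pdmap; simpl; auto|].
  split; [intros i Hi; apply Hs; auto|].
  split.
  { intros i j Hi Hj E'. apply (no_overlap_inj n Q); auto.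
    rewrite (proj2 (Hs i Hi)), (proj2 (Hs j Hj)), E'. auto. }
  split.
  { intros i Hi. rewrite <- V_vertex by auto. apply Hs; auto. }
  rewrite <- !V_vertex by auto. rewrite side_V by (auto; unfold pd', pdmap; simpl; lra).
  unfold pd', pdmap; simpl. unfold sn in Hside. unfold s0 in Hside. lra.
Qed.

Lemma map_NoDup_inj (f : nat -> pt) n : (forall k k', (k < n)%nat -> (k' < n)%nat -> f k = f k' -> k = k') ->
  NoDup (map f (seq 0 n)).
Proof. intros H. apply NoDup_map_NoDup_ForallPairs; [|apply seq_NoDup].
  intros x y Hx Hy E. apply in_seq in Hx, Hy. apply H; auto; lia. Qed.

Lemma free_slot_exists n Q pd M : (1 < n)%nat -> 0 < pr pd -> no_overlap n Q ->
  imgP n Q M -> ~ Slot n pd M -> exists k, (k < n)%nat /\ ~ imgP n Q (V n pd k).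
Proof.
  intros Hn Hr Hno HM HnsM. apply NNPP. intro Hall.
  assert (Hin : forall k, (k < n)%nat -> imgP n Q (V n pd k)).
  { intros k Hk. apply NNPP. intro H. apply Hall. eauto. }
  set (L := M :: map (V n pd) (seq 0 n)).
  assert (HL : NoDup L).
  { constructor.
    - intro H. apply in_map_iff in H. destruct H as [k [E _]]. apply HnsM. rewrite <- E. apply V_slot.
    - apply map_NoDup_inj. intros k k' Hk Hk' E. apply (V_inj n pd); auto. }
  pose proof (count_le n Q L HL) as Hc.
  assert (length L <= n)%nat.
  { apply Hc. intros q [<-|Hq]; auto. apply in_map_iff in Hq. destruct Hq as [k [<- Hk]].
    apply in_seq in Hk. apply Hin. lia. }
  unfold L in H. simpl in H. rewrite length_map, length_seq in H. lia.
Qed.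

Lemma axis_count n Q pd D0 M c : (1 < n)%nat -> 0 < pr pd -> no_overlap n Q ->
  Slot n pd D0 -> (forall v, Slot n pd v -> ~ imgP n Q v -> v = D0) ->
  imgP n Q M -> ~ Slot n pd M -> imgP n Q (refl c M) -> ~ Slot n pd (refl c M) -> M <> refl c M -> False.
Proof.
  intros Hn Hr Hno HD0 Hfree HM HnsM HsM HnssM HneM.
  destruct (slot_V n pd D0 Hn HD0) as [k0 [Hk0 E0]].
  set (f := fun k => if pt_eq_dec (V n pd k) D0 then M else V n pd k).
  set (L := refl c M :: map f (seq 0 n)).
  assert (Hf : forall k, (k < n)%nat -> f k = M \/ (f k = V n pd k /\ V n pd k <> D0)).
  { intros k Hk. unfold f. destruct (pt_eq_dec (V n pd k) D0); [left|right]; auto. }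
  assert (HL : NoDup L).
  { constructor.
    - intro H. apply in_map_iff in H. destruct H as [k [E Hk]]. apply in_seq in Hk.
      destruct (Hf k ltac:(lia)) as [E'|[E' _]]; rewrite E' in E.
      + apply HneM; auto.
      + apply HnssM. rewrite <- E. apply V_slot.
    - apply map_NoDup_inj. intros k k' Hk Hk' E.
      unfold f in E. destruct (pt_eq_dec (V n pd k) D0) as [E1|N1]; destruct (pt_eq_dec (V n pd k') D0) as [E2|N2].
      + apply (V_inj n pd); auto. congruence.
      + exfalso. apply HnsM. rewrite E. apply V_slot.
      + exfalso. apply HnsM. rewrite <- E. apply V_slot.
      + apply (V_inj n pd); auto. }
  assert (length L <= n)%nat.
  { apply (count_le n Q L HL). intros q [<-|Hq]; auto. apply in_map_iff in Hq. destruct Hq as [k [<- Hk]].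
    apply in_seq in Hk. destruct (Hf k ltac:(lia)) as [E|[E Hne]]; rewrite E; auto.
    apply NNPP. intro H. apply Hne. apply Hfree; auto. apply V_slot. }
  unfold L in H. simpl in H. rewrite length_map, length_seq in H. lia.
Qed.

Lemma PtK_n_height n pd : (1 < n)%nat -> snd (PtK n pd (Z.of_nat n)) = pcy pd - pr pd.
Proof. intro Hn. unfold PtK; simpl. rewrite ang_n, cos_PI by auto. ring. Qed.

Lemma fill_choice n a Q pd y W M : (1 < n)%nat -> 3 < a -> no_overlap n Q ->
  Good n a (imgP n Q) pd y W -> Crowd n (imgP n Q) pd M ->
  exists D, Slot n pd D /\ ~ imgP n Q D /\ (forall v, Slot n pd v -> ~ imgP n Q v -> snd v <= snd D) /\
    (forall c, sym (imgP n Q) c -> M <> refl c M -> 0 < (fst D - c) * (fst M - c)).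
Proof.
  intros Hn Ha Hno HG HM. set (S := imgP n Q) in *.
  pose proof (Good_AF n a S pd y W Hn Ha HG) as AF.
  pose proof AF as (Hr & _ & _ & _ & _ & _ & _ & _ & _ & Haxis & Hax & _).
  pose proof (Cfg_of n Q ltac:(lia) Hno) as HC. fold S in HC.
  destruct (free_slot_exists n Q pd M Hn Hr Hno (proj1 HM) (proj2 HM)) as [k1 [Hk1 Hfk1]].
  destruct (max_P n (V n pd) (fun v => ~ S v) snd) as [D0 [HD0 [HnD0 Hmax0]]].
  { exists (V n pd k1). split; auto. exists k1; auto. }
  assert (HsD0 : Slot n pd D0) by (destruct HD0 as [k [_ ->]]; apply V_slot).
  assert (Hmax : forall v, Slot n pd v -> ~ S v -> snd v <= snd D0).
  { intros v Hv Hnv. destruct (slot_V n pd v Hn Hv) as [k [Hk ->]]. apply Hmax0; auto. exists k; auto. }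
  destruct (classic (exists c, sym S c /\ M <> refl c M)) as [[c [Hs HnM]]|Hno2].
  2:{ exists D0. split; auto. split; auto. split; auto. intros c Hs HnM. exfalso; apply Hno2; eauto. }
  pose proof (Hax c Hs) as Ec.
  pose proof (refl_ne_x c M HnM) as HxM.
  assert (Huc : forall c', sym S c' -> c' = c) by (intros; apply (proj2 HC); auto).
  destruct (Rtotal_order ((fst D0 - c) * (fst M - c)) 0) as [Hlt|[Heq|Hgt]].
  - exists (refl c D0). split; [rewrite Ec; apply slot_refl; auto|].
    split; [intro H; apply HnD0; rewrite <- (refl_refl c D0); apply Hs; auto|].
    split; [intros v Hv Hnv; apply Hmax; auto|].
    intros c' Hs' HnM'. rewrite (Huc c' Hs'). unfold refl; simpl. nra.
  - exfalso.
    assert (HxD : fst D0 = c).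
    { destruct (Rmult_integral _ _ Heq) as [H|H]; lra. }
    assert (HD0b : D0 = PtK n pd (Z.of_nat n)) by (apply Haxis; auto; rewrite HxD; auto).
    apply (axis_count n Q pd D0 M c Hn Hr Hno HsD0).
    + intros v Hv Hnv. pose proof (Hmax v Hv Hnv) as Hle. rewrite HD0b in Hle |- *.
      rewrite PtK_n_height in Hle by auto. apply slot_bottom; auto.
    + apply HM.
    + apply HM.
    + apply Hs, HM.
    + intro H. apply (proj2 HM). rewrite <- (refl_refl c M), Ec. apply slot_refl. rewrite <- Ec; auto.
    + auto.
  - exists D0. split; auto. split; auto. split; auto.
    intros c' Hs' HnM'. rewrite (Huc c' Hs'). lra.
Qed.

Lemma spec_ok n a Q m : (1 < n)%nat -> 3 < a -> no_overlap n Q -> RankIs n a (imgP n Q) m ->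
  (forall m', RankIs n a (imgP n Q) m' -> (m <= m')%nat) -> exists M D, Spec0 n a (imgP n Q) m M D.
Proof.
  intros Hn Ha Hno HR Hmin. set (S := imgP n Q) in *.
  destruct HR as [C|[C|[C|[C|[C|C]]]]].
  - destruct C as [HN2 Hm]. pose proof HN2 as [q1 [q2 [q3 [H1 [_ [_ [_ [_ [_ [_ [_ Htop]]]]]]]]]]].
    exists q1, (fst q1, snd q1 + 2). left. auto.
  - destruct C as [A [B [HA2 [Hd Hm]]]]. exists A, (fst A, snd A + 2). right; left. exists A, B. auto.
  - destruct C as [A [B [HA2 [Hd [Hel Hm]]]]]. exists A, (fst A + s0 a * sgnR (fst A - fst B), snd A).
    right; right; left. exists A, B. auto 10.
  - destruct C as [A [B [HA2 [Hd Hm]]]].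
    destruct (bound_f n Q (fun q => Rabs (fst q - pcx (pd2 n A B)))) as [B1 HB1].
    destruct (bound_f n Q snd) as [B2 HB2].
    set (W := Rmax 0 B1). set (Y := Rmax (snd A + 1) (B2 + GW (pd2 n A B) W + 2)).
    exists A, (fst A, Y). right; right; right; left. exists A, B, W, Y.
    split; auto. split; auto. split; auto. split; auto. split; auto. split; [unfold Y; pose proof (Rmax_l (snd A + 1) (B2 + GW (pd2 n A B) W + 2)); lra|].
    split; [apply Rmax_l|]. intros q Hq _ _. split.
    + eapply Rle_trans; [apply HB1; auto|apply Rmax_r].
    + pose proof (HB2 q Hq). pose proof (Rmax_r (snd A + 1) (B2 + GW (pd2 n A B) W + 2)). fold Y in H0. lra.
  - destruct C as [T [HA1 Hm]].
    destruct (bound_f n Q (fun q => Rabs (fst q - fst T))) as [B1 HB1].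
    destruct (bound_f n Q snd) as [B2 HB2].
    set (W := Rmax 0 B1). set (Y := Rmax (snd T + 1) (B2 + GW (pd1 n a T) W + 2)).
    exists T, (fst T, Y). right; right; right; right; left. exists T, W, Y.
    split; auto. split; auto. split; auto. split; auto. split; [unfold Y; pose proof (Rmax_l (snd T + 1) (B2 + GW (pd1 n a T) W + 2)); lra|].
    split; [apply Rmax_l|]. intros q Hq _. split.
    + eapply Rle_trans; [apply HB1; auto|apply Rmax_r].
    + pose proof (HB2 q Hq). pose proof (Rmax_r (snd T + 1) (B2 + GW (pd1 n a T) W + 2)). fold Y in H0. lra.
  - destruct C as [pd [y [W [l [b [HG [HL [Hb [Hb0 Hm]]]]]]]]].
    pose proof HL as [HLnd HLin].
    destruct Hb as [->| ->].
    +
      specialize (Hb0 eq_refl).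
      destruct l as [|q l'].
      * exists (Q 0%nat), (Q 0%nat). right; right; right; right; right.
        exists pd, y, W, nil. split; auto. split; auto. right; right. split; [simpl in Hm; lia|].
        split; auto. split; auto. exists 0%nat; split; auto; lia.
      * assert (Hq : Crowd n S pd q) by (apply HLin; left; auto).
        destruct Hb0 as [Hnone|[M HSep]]; [exfalso; apply (Hnone q); auto|].
        destruct (fill_choice n a Q pd y W M Hn Ha Hno HG (proj1 HSep)) as [D [HD [HnD [Hmaxv Hside]]]].
        exists M, D. right; right; right; right; right. exists pd, y, W, (q :: l'). split; auto. split; auto.
        right; left. split; [lia|]. split; [discriminate|]. auto.
    +
      assert (HnS : ~ Sep n S pd).
      { intro HSep. assert (RankIs n a S (2 * length l + 0)%nat).
        { right; right; right; right; right. exists pd, y, W, l, 0%nat. split; [auto|].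
          split; [auto|]. split; [left; auto|]. split; [auto|]. auto. }
        apply Hmin in H. lia. }
      destruct (classic (exists q, Crowd n S pd q)) as [[q0' Hq0']|Hnc].
      2:{ exfalso. apply HnS. left. intros q Hq. apply Hnc; eauto. }
      destruct (max_P n Q (Crowd n S pd) snd) as [M [_ [HM Hmax]]].
      { exists q0'. split; auto. apply Hq0'. }
      destruct (classic (exists q, Crowd n S pd q /\ q <> M)) as [[q1 [Hq1 Hq1M]]|Hnc2].
      2:{ exfalso. apply HnS. right. exists M. split; auto. split.
          - intros q Hq. apply Hmax; auto. apply Hq.
          - intros q Hq _. left. apply NNPP. intro H. apply Hnc2. eauto. }
      destruct (max_P n Q (fun q => Crowd n S pd q /\ q <> M) snd) as [q0 [_ [[Hq0 Hq0M] Hq0m]]].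
      { exists q1. split; auto. apply Hq1. }
      exists M, (fst M, snd q0 + 2). right; right; right; right; right. exists pd, y, W, l.
      split; auto. split; auto. left. split; auto. split; auto. split; auto. split.
      { intros q Hq. apply Hmax; auto. apply Hq. }
      exists q0. split; auto. split; auto. split; auto.
      intros q Hq HqM. apply Hq0m; auto. apply Hq.
Qed.

Lemma hyps_ok n a : (1 < n)%nat -> 3 < a -> Hyps n a (RankIs n a) (Spec0 n a).
Proof.
  intros Hn Ha. split; [auto|]. split; [|split; [|split; [|split]]].
  - intros Q Hno. apply (cover_ok n a Q); auto.
  - intros Q m Hno HR Hmin. apply (spec_ok n a Q m); auto.
  - intros Q m M D Hno HS. apply (prog_ok n a Q m M D); auto.
  - intros Q Q' m M D Hno HS HMv.
    pose proof (core_cfm n a Q Q' m M D Hn Ha Hno HS HMv) as Hcf.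
    split; auto. apply (core_rank n a Q Q' m M D Hn Ha Hno); auto. apply (cfm_end n Q); auto.
  - intros Q g Hno HR. apply (final_ok n a Q g); auto.
Qed.

Theorem mainTheorem1 :
  forall (n : nat) (a : R), (1 < n)%nat -> 3 < a ->
  exists A : algorithm,
    forall (F : nat -> frame) (P0 : config) (act : nat -> nat -> bool),
      no_overlap n P0 ->
      valid_schedule n act ->
      (exists k, uniform_circle n a (exec n A F act P0 k)) /\
      (forall k, collision_free_move n (exec n A F act P0 k)
                                       (exec n A F act P0 (S k))).
Proof.
  intros n a Hn Ha. apply (framework n a (RankIs n a) (Spec0 n a)). apply hyps_ok; auto.
Qed.
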